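(* Let $N_1,N_2$ be continuous fuzzy negations and $U_1,U_2$ disjunctive uninorms with neutral elements $e_1,e_2\in\,]0,1[$ respectively, such that $U_1(N_1(x),y)=U_2(N_2(x),y)$ for all $x,y\in[0,1]$. If $U_1$ has continuous underlying functions and $N_1\neq N_2$, then $U_2$ also has continuous underlying functions, and there exist idempotent points $a,d\in[0,1]$ of $U_1$ with $a<d$ such that the restriction of $U_1$ to $]a,d[^2$, and likewise the restriction of $U_2$ to $]a,d[^2$, is a linear transformation of some representable uninorm restricted to $]0,1[^2$. Moreover, $U_1$ coincides with $U_2$ on $([0,a]\cup[d,1])^2$.
   Context: A fuzzy negation is a non-increasing map $N:[0,1]\to[0,1]$ with $N(0)=1$, $N(1)=0$. A uninorm is a map $U:[0,1]^2\to[0,1]$ that is commutative, associative, non-decreasing in each variable, and has a neutral element $e\in[0,1]$; it is disjunctive if $U(1,0)=1$. For a uninorm with neutral element $e\in\,]0,1[$, the underlying t-norm is $T_U(x,y)=U(ex,ey)/e$ and the underlying t-conorm is $S_U(x,y)=(U(e+(1-e)x,e+(1-e)y)-e)/(1-e)$, $x,y\in[0,1]$; $U$ has continuous underlying functions if both are continuous. An idempotent point of $U$ is $z$ with $U(z,z)=z$. A uninorm $V$ with neutral element $e\in\,]0,1[$ is representable if there is a continuous strictly increasing $h:[0,1]\to[-\infty,+\infty]$ with $h(0)=-\infty$, $h(e)=0$, $h(1)=+\infty$ and $V(x,y)=h^{-1}(h(x)+h(y))$ for $(x,y)\notin\{(0,1),(1,0)\}$. The restriction of $U$ to $]a,d[^2$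 is a linear transformation of $V$ restricted to $]0,1[^2$ if $U(x,y)=a+(d-a)V\big(\frac{x-a}{d-a},\frac{y-a}{d-a}\big)$ for all $x,y\in\,]a,d[$. *)

(* Defs.v *)
From Stdlib Require Import Reals.
Open Scope R_scope.

Definition I01 (x : R) : Prop := 0 <= x <= 1.
Definition Iopen01 (x : R) : Prop := 0 < x < 1.

Definition fuzzy_negation (N : R -> R) : Prop :=
  (forall x, I01 x -> I01 (N x)) /\
  (forall x y, I01 x -> I01 y -> x <= y -> N y <= N x) /\
  N 0 = 1 /\ N 1 = 0.

Definition continuous_on01 (f : R -> R) : Prop :=
  forall x, I01 x -> forall eps, 0 < eps -> exists delta, 0 < delta /\
    forall y, I01 y -> Rabs (y - x) < delta -> Rabs (f y - f x) < eps.

Definition continuous_on01_2 (F : R -> R -> R) : Prop :=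
  forall x y, I01 x -> I01 y -> forall eps, 0 < eps -> exists delta, 0 < delta /\
    forall x' y', I01 x' -> I01 y' -> Rabs (x' - x) < delta -> Rabs (y' - y) < delta ->
      Rabs (F x' y' - F x y) < eps.

Definition uninorm (U : R -> R -> R) (e : R) : Prop :=
  I01 e /\
  (forall x y, I01 x -> I01 y -> I01 (U x y)) /\
  (forall x y, I01 x -> I01 y -> U x y = U y x) /\
  (forall x y z, I01 x -> I01 y -> I01 z -> U x (U y z) = U (U x y) z) /\
  (forall x1 x2 y, I01 x1 -> I01 x2 -> I01 y -> x1 <= x2 -> U x1 y <= U x2 y) /\
  (forall x, I01 x -> U e x = x).

Definition disjunctive (U : R -> R -> R) : Prop := U 1 0 = 1.

Definition underlying_tnorm (U : R -> R -> R) (e : R) : R -> R -> R :=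
  fun x y => U (e * x) (e * y) / e.

Definition underlying_tconorm (U : R -> R -> R) (e : R) : R -> R -> R :=
  fun x y => (U (e + (1 - e) * x) (e + (1 - e) * y) - e) / (1 - e).

Definition continuous_underlying (U : R -> R -> R) (e : R) : Prop :=
  continuous_on01_2 (underlying_tnorm U e) /\ continuous_on01_2 (underlying_tconorm U e).

Definition idempotent (U : R -> R -> R) (z : R) : Prop := U z z = z.

(* The generator h : [0,1] -> [-oo,+oo] is encoded by its (real-valued) restriction to
   ]0,1[, together with h(0) = -oo, h(1) = +oo and continuity into the extended reals,
   i.e. h x -> -oo as x -> 0+ and h x -> +oo as x -> 1-.  The formula
   V(x,y) = h^{-1}(h x + h y) for (x,y) not in {(0,1),(1,0)} is spelled out:
   on ]0,1[^2 it says h (V x y) = h x + h y with V x y in ]0,1[ (h is injective there);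
   if one argument is 0 and the other is < 1 the sum is -oo, so V = 0;
   if one argument is 1 and the other is > 0 the sum is +oo, so V = 1. *)
Definition representable (V : R -> R -> R) (e : R) : Prop :=
  0 < e < 1 /\ uninorm V e /\
  exists h : R -> R,
    (forall x y, Iopen01 x -> Iopen01 y -> x < y -> h x < h y) /\
    (forall x, Iopen01 x -> continuity_pt h x) /\
    h e = 0 /\
    (forall M, exists delta, 0 < delta /\ forall x, 0 < x < delta -> h x < M) /\
    (forall M, exists delta, 0 < delta /\ forall x, 1 - delta < x < 1 -> M < h x) /\
    (forall x y, Iopen01 x -> Iopen01 y -> Iopen01 (V x y) /\ h (V x y) = h x + h y) /\
    (forall y, 0 <= y < 1 -> V 0 y = 0 /\ V y 0 = 0) /\
    (forall y, 0 < y <= 1 -> V 1 y = 1 /\ V y 1 = 1).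

Definition linear_transform_on (U V : R -> R -> R) (a d : R) : Prop :=
  forall x y, a < x < d -> a < y < d ->
    U x y = a + (d - a) * V ((x - a) / (d - a)) ((y - a) / (d - a)).

Definition in_outer (a d x : R) : Prop := (0 <= x <= a) \/ (d <= x <= 1).

(* Main.v *)
Require Import Defs.
From Stdlib Require Import Reals.
Open Scope R_scope.
From Stdlib Require Import Lra Lia ClassicalEpsilon ZArith.
Open Scope R_scope.

Definition rc1 (f : R -> R) (A : R -> Prop) (x : R) :=
  forall eps, 0 < eps -> exists del, 0 < del /\
    forall y, A y -> Rabs (y - x) < del -> Rabs (f y - f x) < eps.

Definition rc2 (F : R -> R -> R) (A B : R -> Prop) (x y : R) :=
  forall eps, 0 < eps -> exists del, 0 < del /\
    forall x' y', A x' -> B y' -> Rabs (x' - x) < del -> Rabs (y' - y) < del ->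
      Rabs (F x' y' - F x y) < eps.

Definition Icc (lo hi x : R) : Prop := lo <= x <= hi.

Lemma rc2_comp F A B A' B' f g x y :
  rc2 F A B (f x) (g y) -> rc1 f A' x -> rc1 g B' y ->
  (forall z, A' z -> A (f z)) -> (forall z, B' z -> B (g z)) ->
  rc2 (fun p q => F (f p) (g q)) A' B' x y.
Proof.
  intros HF Hf Hg HA HB eps Heps.
  destruct (HF eps Heps) as [d [Hd Hd']].
  destruct (Hf d Hd) as [d1 [Hd1 Hd1']].
  destruct (Hg d Hd) as [d2 [Hd2 Hd2']].
  exists (Rmin d1 d2); split. { apply Rmin_pos; auto. }
  intros x' y' Hx' Hy' Ex Ey.
  apply Hd'; auto.
  - apply Hd1'; auto. eapply Rlt_le_trans; [exact Ex|apply Rmin_l].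
  - apply Hd2'; auto. eapply Rlt_le_trans; [exact Ey|apply Rmin_r].
Qed.

Lemma rc1_post2 h C F A B x y :
  rc1 h C (F x y) -> rc2 F A B x y -> (forall p q, A p -> B q -> C (F p q)) ->
  rc2 (fun p q => h (F p q)) A B x y.
Proof.
  intros Hh HF HC eps Heps.
  destruct (Hh eps Heps) as [d [Hd Hd']].
  destruct (HF d Hd) as [d1 [Hd1 Hd1']].
  exists d1; split; [exact Hd1|].
  intros x' y' Hx' Hy' Ex Ey. apply Hd'; auto.
Qed.

Lemma rc2_local F A B x y r : 0 < r ->
  rc2 F (fun z => A z /\ Rabs (z - x) < r) B x y -> rc2 F A B x y.
Proof.
  intros Hr H eps Heps. destruct (H eps Heps) as [d [Hd Hd']].
  exists (Rmin d r); split. { apply Rmin_pos; auto. }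
  intros x' y' Hx' Hy' Ex Ey. apply Hd'.
  - split; auto. eapply Rlt_le_trans; [exact Ex|apply Rmin_r].
  - exact Hy'.
  - eapply Rlt_le_trans; [exact Ex|apply Rmin_l].
  - eapply Rlt_le_trans; [exact Ey|apply Rmin_l].
Qed.

Lemma rc1_local f A x r : 0 < r ->
  rc1 f (fun z => A z /\ Rabs (z - x) < r) x -> rc1 f A x.
Proof.
  intros Hr H eps Heps. destruct (H eps Heps) as [d [Hd Hd']].
  exists (Rmin d r); split. { apply Rmin_pos; auto. }
  intros y Hy E. apply Hd'.
  - split; auto. eapply Rlt_le_trans; [exact E|apply Rmin_r].
  - eapply Rlt_le_trans; [exact E|apply Rmin_l].
Qed.

Lemma rc2_ext F G A B x y : A x -> B y ->
  (forall p q, A p -> B q -> F p q = G p q) -> rc2 F A B x y -> rc2 G A B x y.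
Proof.
  intros Hx Hy E H eps Heps. destruct (H eps Heps) as [d [Hd Hd']].
  exists d; split; auto. intros x' y' Hx' Hy' E1 E2.
  rewrite <- !E; auto.
Qed.

Lemma rc1_ext f g A x : A x ->
  (forall p, A p -> f p = g p) -> rc1 f A x -> rc1 g A x.
Proof.
  intros Hx E H eps Heps. destruct (H eps Heps) as [d [Hd Hd']].
  exists d; split; auto. intros y Hy E1. rewrite <- !E; auto.
Qed.

Lemma rc2_sub F A B A' B' x y :
  (forall z, A' z -> A z) -> (forall z, B' z -> B z) -> rc2 F A B x y -> rc2 F A' B' x y.
Proof.
  intros HA HB H eps Heps. destruct (H eps Heps) as [d [Hd Hd']].
  exists d; split; auto.
Qed.

Lemma rc1_sub f A A' x :
  (forall z, A' z -> A z) -> rc1 f A x -> rc1 f A' x.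
Proof.
  intros HA H eps Heps. destruct (H eps Heps) as [d [Hd Hd']].
  exists d; split; auto.
Qed.

Lemma rc1_comp f g A B x : rc1 f A (g x) -> rc1 g B x -> (forall z, B z -> A (g z)) ->
  rc1 (fun z => f (g z)) B x.
Proof.
  intros Hf Hg HB eps Heps. destruct (Hf eps Heps) as [d [Hd Hd']].
  destruct (Hg d Hd) as [d1 [Hd1 Hd1']].
  exists d1; split; auto.
Qed.

Lemma rc1_lin p q A x : rc1 (fun z => p + q * z) A x.
Proof.
  intros eps Heps. exists (eps / (Rabs q + 1)). split.
  { apply Rdiv_lt_0_compat; auto. pose proof (Rabs_pos q). lra. }
  intros y _ E.
  replace (p + q * y - (p + q * x)) with (q * (y - x)) by ring.
  rewrite Rabs_mult.
  assert (Hq : 0 <= Rabs q) by apply Rabs_pos.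
  assert (Hy : 0 <= Rabs (y - x)) by apply Rabs_pos.
  apply Rle_lt_trans with ((Rabs q + 1) * Rabs (y - x)). { nra. }
  apply Rlt_le_trans with ((Rabs q + 1) * (eps / (Rabs q + 1))).
  - apply Rmult_lt_compat_l; auto. lra.
  - right. field. lra.
Qed.

Lemma rc2_fix1 F A B x y : A x -> rc2 F A B x y -> rc1 (fun q => F x q) B y.
Proof.
  intros Hx H eps Heps. destruct (H eps Heps) as [d [Hd Hd']].
  exists d; split; auto. intros z Hz E. apply Hd'; auto.
  replace (x - x) with 0 by ring. rewrite Rabs_R0; auto.
Qed.

Lemma rc2_diag F A x : rc2 F A A x x -> rc1 (fun z => F z z) A x.
Proof.
  intros H eps Heps. destruct (H eps Heps) as [d [Hd Hd']].
  exists d; split; auto.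
Qed.

Lemma IVT_on (f : R -> R) lo hi t : lo <= hi ->
  (forall z, Icc lo hi z -> rc1 f (Icc lo hi) z) ->
  f lo <= t <= f hi -> exists z, Icc lo hi z /\ f z = t.
Proof.
  intros Hle Hc Ht.
  set (cl := fun z => Rmax lo (Rmin hi z)).
  assert (Hcl : forall z, Icc lo hi (cl z)).
  { intros z. unfold cl, Icc. split; [apply Rmax_l|].
    apply Rmax_lub; auto. apply Rmin_l. }
  assert (Hcl2 : forall z w, Rabs (cl z - cl w) <= Rabs (z - w)).
  { intros z w. unfold cl, Rmax, Rmin.
    repeat (destruct Rle_dec); unfold Rabs; repeat destruct Rcase_abs; lra. }
  assert (Hcl3 : forall z, Icc lo hi z -> cl z = z).
  { intros z [H1 H2]. unfold cl, Rmax, Rmin. repeat destruct Rle_dec; lra. }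
  set (g := fun z => f (cl z) - t).
  assert (Hg : continuity g).
  { intros z0 eps Heps.
    destruct (Hc (cl z0) (Hcl z0) eps Heps) as [d [Hd Hd']].
    exists d; split; [lra|]. intros z [_ Hz]. simpl in Hz |- *. unfold Rdist in *.
    unfold g. replace (f (cl z) - t - (f (cl z0) - t)) with (f (cl z) - f (cl z0)) by ring.
    apply Hd'; auto. eapply Rle_lt_trans; [apply Hcl2|exact Hz]. }
  destruct (IVT_cor g lo hi Hg Hle) as [z [Hz Hgz]].
  { unfold g. rewrite !Hcl3; unfold Icc; try lra. nra. }
  exists z. split; [exact Hz|]. unfold g in Hgz. rewrite Hcl3 in Hgz; auto. lra.
Qed.

Lemma mono_bij_cont (f g : R -> R) :
  (forall x, I01 x -> I01 (f x)) -> (forall x, I01 x -> I01 (g x)) ->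
  (forall x, I01 x -> g (f x) = x) -> (forall x, I01 x -> f (g x) = x) ->
  (forall x y, I01 x -> I01 y -> x <= y -> f x <= f y) ->
  (forall x y, I01 x -> I01 y -> x <= y -> g x <= g y) ->
  forall x, I01 x -> rc1 f I01 x.
Proof.
  intros Hf Hg Hgf Hfg Mf Mg x Hx eps Heps.
  set (y := f x).
  assert (Hy : I01 y) by (apply Hf; auto).
  assert (Hgy : g y = x) by (apply Hgf; auto).
  assert (K1 : exists d1, 0 < d1 /\ forall z, I01 z -> Rabs (z - x) < d1 -> f z < y + eps/2).
  { destruct (Rle_dec (y + eps/2) 1) as [C|C].
    - assert (HI : I01 (y + eps/2)) by (unfold I01 in *; lra).
      assert (H0 : x <= g (y + eps / 2)) by (rewrite <- Hgy; apply Mg; auto; lra).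
      exists (g (y + eps/2) - x). split.
      + destruct (Rle_lt_or_eq_dec _ _ H0); [lra|].
        exfalso. assert (H1 : f (g (y + eps/2)) = y + eps/2) by auto.
        rewrite <- e in H1. unfold y in H1. lra.
      + intros z Hz E. destruct (Rle_dec (y + eps/2) (f z)) as [C2|C2]; [|lra].
        exfalso.
        assert (g (y + eps/2) <= g (f z)) by (apply Mg; auto).
        rewrite Hgf in H; auto. apply Rabs_def2 in E. lra.
    - exists 1. split; [lra|]. intros z Hz _. assert (I01 (f z)) by auto. unfold I01 in *. lra. }
  assert (K2 : exists d2, 0 < d2 /\ forall z, I01 z -> Rabs (z - x) < d2 -> y - eps/2 < f z).
  { destruct (Rle_dec 0 (y - eps/2)) as [C|C].
    - assert (HI : I01 (y - eps/2)) by (unfold I01 in *; lra).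
      assert (H0 : g (y - eps / 2) <= x) by (rewrite <- Hgy; apply Mg; auto; lra).
      exists (x - g (y - eps/2)). split.
      + destruct (Rle_lt_or_eq_dec _ _ H0); [lra|].
        exfalso. assert (H1 : f (g (y - eps/2)) = y - eps/2) by auto.
        rewrite e in H1. unfold y in H1. lra.
      + intros z Hz E. destruct (Rle_dec (f z) (y - eps/2)) as [C2|C2]; [|lra].
        exfalso.
        assert (g (f z) <= g (y - eps/2)) by (apply Mg; auto).
        rewrite Hgf in H; auto. apply Rabs_def2 in E. lra.
    - exists 1. split; [lra|]. intros z Hz _. assert (I01 (f z)) by auto. unfold I01 in *. lra. }
  destruct K1 as [d1 [Hd1 K1]]. destruct K2 as [d2 [Hd2 K2]].
  exists (Rmin d1 d2); split. { apply Rmin_pos; auto. }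
  intros z Hz E.
  assert (E1 : Rabs (z - x) < d1) by (eapply Rlt_le_trans; [exact E|apply Rmin_l]).
  assert (E2 : Rabs (z - x) < d2) by (eapply Rlt_le_trans; [exact E|apply Rmin_r]).
  specialize (K1 z Hz E1). specialize (K2 z Hz E2). fold y.
  apply Rabs_def1; lra.
Qed.

Definition is_glb (E : R -> Prop) (p : R) :=
  (forall s, E s -> p <= s) /\ (forall b, (forall s, E s -> b <= s) -> b <= p).

Lemma glb_exists (E : R -> Prop) : (exists s, E s) -> (exists b, forall s, E s -> b <= s) ->
  exists p, is_glb E p.
Proof.
  intros [s Hs] [b Hb].
  destruct (completeness (fun t => E (- t))) as [m [Hm1 Hm2]].
  { exists (- b). intros t Ht. specialize (Hb _ Ht). lra. }
  { exists (- s). rewrite Ropp_involutive. auto. }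
  exists (- m). split.
  - intros t Ht. assert (- t <= m) by (apply Hm1; rewrite Ropp_involutive; auto). lra.
  - intros c Hc. assert (m <= - c).
    { apply Hm2. intros t Ht. specialize (Hc _ Ht). lra. }
    lra.
Qed.

Lemma Rdiv_le_1 a b : 0 < b -> a <= b -> a / b <= 1.
Proof. intros. apply (Rmult_le_reg_r b); auto. unfold Rdiv. rewrite Rmult_assoc, Rinv_l; lra. Qed.
Lemma Rdiv_le_0_compat a b : 0 <= a -> 0 < b -> 0 <= a / b.
Proof. intros. unfold Rdiv. apply Rmult_le_pos; auto. left; apply Rinv_0_lt_compat; auto. Qed.

Section Uni.
Variables (U : R -> R -> R) (e : R).
Hypothesis HU : uninorm U e.
Hypothesis He : 0 < e < 1.

Lemma Urange x y : I01 x -> I01 y -> I01 (U x y).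
Proof. destruct HU as [_ [H _]]. auto. Qed.
Lemma Ucomm x y : I01 x -> I01 y -> U x y = U y x.
Proof. destruct HU as [_ [_ [H _]]]. auto. Qed.
Lemma Uassoc x y z : I01 x -> I01 y -> I01 z -> U x (U y z) = U (U x y) z.
Proof. destruct HU as [_ [_ [_ [H _]]]]. auto. Qed.
Lemma Umono_l x1 x2 y : I01 x1 -> I01 x2 -> I01 y -> x1 <= x2 -> U x1 y <= U x2 y.
Proof. destruct HU as [_ [_ [_ [_ [H _]]]]]. auto. Qed.
Lemma Uneut_l x : I01 x -> U e x = x.
Proof. destruct HU as [_ [_ [_ [_ [_ H]]]]]. auto. Qed.
Lemma Ie : I01 e.
Proof. unfold I01; lra. Qed.
Lemma Umono_r x y1 y2 : I01 x -> I01 y1 -> I01 y2 -> y1 <= y2 -> U x y1 <= U x y2.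
Proof. intros. rewrite (Ucomm x y1), (Ucomm x y2); auto. apply Umono_l; auto. Qed.
Lemma Uneut_r x : I01 x -> U x e = x.
Proof. intros. rewrite Ucomm; auto using Ie. apply Uneut_l; auto. Qed.
Lemma Umono x1 x2 y1 y2 : I01 x1 -> I01 x2 -> I01 y1 -> I01 y2 -> x1 <= x2 -> y1 <= y2 ->
  U x1 y1 <= U x2 y2.
Proof.
  intros. apply Rle_trans with (U x2 y1). apply Umono_l; auto. apply Umono_r; auto.
Qed.

Lemma U_e1 : U e 1 = 1.
Proof. apply Uneut_l. unfold I01; lra. Qed.
Lemma U_e0 : U e 0 = 0.
Proof. apply Uneut_l. unfold I01; lra. Qed.

Hypothesis Hc : continuous_underlying U e.

Lemma contL x y : Icc 0 e x -> Icc 0 e y -> rc2 U (Icc 0 e) (Icc 0 e) x y.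
Proof.
  intros Hx Hy. destruct Hc as [HT _].
  unfold Icc in *.
  set (f := fun z => 0 + (/ e) * z).
  assert (Hf : forall z, 0 <= z <= e -> I01 (f z)).
  { intros z Hz. unfold f, I01. split.
    - apply Rplus_le_le_0_compat; [lra|]. apply Rmult_le_pos; [left; apply Rinv_0_lt_compat; lra|lra].
    - replace (0 + / e * z) with (z / e) by (field; lra).
      apply Rdiv_le_1; lra. }
  assert (H1 : rc2 (fun p q => underlying_tnorm U e (f p) (f q)) (Icc 0 e) (Icc 0 e) x y).
  { apply rc2_comp with (A := I01) (B := I01).
    - unfold rc2; apply HT; apply Hf; auto.
    - apply rc1_lin.
    - apply rc1_lin.
    - intros z Hz; apply Hf; auto.
    - intros z Hz; apply Hf; auto. }
  assert (H2 := rc1_post2 (fun z => 0 + e * z) (fun _ => True) _ _ _ x y (rc1_lin 0 e _ _) H1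
                 (fun _ _ _ _ => I)).
  eapply rc2_ext; [exact Hx|exact Hy| |exact H2].
  intros p q Hp Hq. simpl. unfold underlying_tnorm, f.
  replace (e * (0 + / e * p)) with p by (field; lra).
  replace (e * (0 + / e * q)) with q by (field; lra).
  field. lra.
Qed.

Lemma contH x y : Icc e 1 x -> Icc e 1 y -> rc2 U (Icc e 1) (Icc e 1) x y.
Proof.
  intros Hx Hy. destruct Hc as [_ HS].
  unfold Icc in *.
  set (f := fun z => (- e / (1 - e)) + (/ (1 - e)) * z).
  assert (Hf : forall z, e <= z <= 1 -> I01 (f z)).
  { intros z Hz. unfold f, I01.
    replace (- e / (1 - e) + / (1 - e) * z) with ((z - e) / (1 - e)) by (field; lra).
    split.
    - apply Rdiv_le_0_compat; lra.
    - apply Rdiv_le_1; lra. }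
  assert (H1 : rc2 (fun p q => underlying_tconorm U e (f p) (f q)) (Icc e 1) (Icc e 1) x y).
  { apply rc2_comp with (A := I01) (B := I01).
    - unfold rc2; apply HS; apply Hf; auto.
    - apply rc1_lin.
    - apply rc1_lin.
    - intros z Hz; apply Hf; auto.
    - intros z Hz; apply Hf; auto. }
  assert (H2 := rc1_post2 (fun z => e + (1 - e) * z) (fun _ => True) _ _ _ x y (rc1_lin e (1 - e) _ _) H1
                 (fun _ _ _ _ => I)).
  eapply rc2_ext; [exact Hx|exact Hy| |exact H2].
  intros p q Hp Hq. simpl. unfold underlying_tconorm, f.
  replace (e + (1 - e) * (- e / (1 - e) + / (1 - e) * p)) with p by (field; lra).
  replace (e + (1 - e) * (- e / (1 - e) + / (1 - e) * q)) with q by (field; lra).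
  field. lra.
Qed.

Definition uunit (w w' : R) := I01 w /\ I01 w' /\ U w w' = e.

Lemma unit_sym w w' : uunit w w' -> uunit w' w.
Proof. intros [H1 [H2 H3]]. split; [exact H2|split; [exact H1|]]. rewrite Ucomm; auto. Qed.

Lemma T_inv w w' x : uunit w w' -> I01 x -> U (U x w) w' = x.
Proof.
  intros [H1 [H2 H3]] Hx. rewrite <- Uassoc; auto. rewrite H3. apply Uneut_r; auto.
Qed.

Lemma T_inj w w' x y : uunit w w' -> I01 x -> I01 y -> U x w = U y w -> x = y.
Proof.
  intros Hw Hx Hy E. rewrite <- (T_inv w w' x), <- (T_inv w w' y); auto. rewrite E; auto.
Qed.

Lemma T_strict w w' x y : uunit w w' -> I01 x -> I01 y -> x < y -> U x w < U y w.
Proof.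
  intros Hw Hx Hy Lt. destruct (Hw) as [H1 _].
  assert (U x w <= U y w) by (apply Umono_l; auto; lra).
  destruct H; auto. apply (T_inj w w') in H; auto. lra.
Qed.

Lemma T_cont w w' x : uunit w w' -> I01 x -> rc1 (fun z => U z w) I01 x.
Proof.
  intros Hw Hx. destruct Hw as [H1 [H2 H3]].
  apply mono_bij_cont with (g := fun z => U z w'); auto.
  - intros; apply Urange; auto.
  - intros; apply Urange; auto.
  - intros; apply (T_inv w w'); auto. split; [exact H1|split; [exact H2|exact H3]].
  - intros; apply (T_inv w' w); auto. apply unit_sym. split; [exact H1|split; [exact H2|exact H3]].
  - intros; apply Umono_l; auto.
  - intros; apply Umono_l; auto.
Qed.

Lemma unit_mul w w' z z' : uunit w w' -> uunit z z' -> uunit (U w z) (U w' z').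
Proof.
  intros [H1 [H2 H3]] [H4 [H5 H6]]. split; [apply Urange; auto|split; [apply Urange; auto|]].
  rewrite <- (Uassoc w z); try apply Urange; auto.
  rewrite (Uassoc z w' z'); auto. rewrite (Ucomm z w'); auto.
  rewrite <- (Uassoc w' z z'); auto. rewrite H6, Uneut_r; auto.
Qed.

Lemma unit_inv_unique w w1 w2 : uunit w w1 -> uunit w w2 -> w1 = w2.
Proof.
  intros [H1 [H2 H3]] [H4 [H5 H6]].
  rewrite <- (Uneut_r w1); auto. rewrite <- H6. rewrite Uassoc; auto.
  rewrite (Ucomm w1 w); auto. rewrite H3. apply Uneut_l; auto.
Qed.

Fixpoint pw (w : R) (n : nat) : R :=
  match n with O => e | S n => U (pw w n) w end.

Lemma pw_range w n : I01 w -> I01 (pw w n).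
Proof. intros Hw; induction n; simpl; auto using Ie. apply Urange; auto. Qed.

Lemma pw_add w m n : I01 w -> U (pw w m) (pw w n) = pw w (m + n).
Proof.
  intros Hw. induction n.
  - simpl. rewrite Nat.add_0_r. apply Uneut_r, pw_range; auto.
  - simpl. rewrite Nat.add_succ_r. simpl. rewrite Uassoc; try apply pw_range; auto.
    rewrite IHn; auto.
Qed.

Lemma pw_mul w z n : I01 w -> I01 z -> pw (U w z) n = U (pw w n) (pw z n).
Proof.
  intros Hw Hz. induction n.
  - simpl. rewrite Uneut_l; auto using Ie.
  - simpl. rewrite IHn.
    assert (Pw := pw_range w n Hw). assert (Pz := pw_range z n Hz).
    rewrite <- (Uassoc (pw w n) (pw z n)); try apply Urange; auto.
    rewrite (Uassoc (pw z n) w z); auto.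
    rewrite (Ucomm (pw z n) w); auto.
    rewrite <- (Uassoc w (pw z n) z); auto.
    rewrite (Uassoc (pw w n) w); try apply Urange; auto.
Qed.

Lemma pw_unit w w' n : uunit w w' -> uunit (pw w n) (pw w' n).
Proof.
  intros Hw. induction n.
  - simpl. split; [exact Ie|split; [exact Ie|]]. apply Uneut_l, Ie.
  - simpl. apply unit_mul; auto.
Qed.

Lemma pw_sq w n : I01 w -> pw (U w w) n = pw w (n + n).
Proof. intros Hw. rewrite pw_mul, pw_add; auto. Qed.

Lemma pw_ge_e w n : I01 w -> e <= w -> e <= pw w n.
Proof.
  intros Hw Hew. induction n; simpl; [lra|].
  apply Rle_trans with (U (pw w n) e).
  - rewrite Uneut_r; auto using pw_range.
  - apply Umono_r; auto using pw_range, Ie.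
Qed.

Lemma pw_le_e w n : I01 w -> w <= e -> pw w n <= e.
Proof.
  intros Hw Hew. induction n; simpl; [lra|].
  apply Rle_trans with (U (pw w n) e).
  - apply Umono_r; auto using pw_range, Ie.
  - rewrite Uneut_r; auto using pw_range.
Qed.

Lemma IVT_H x t : Icc e 1 x -> Icc x 1 t -> exists z, Icc e 1 z /\ U x z = t.
Proof.
  intros Hx Ht. unfold Icc in *.
  assert (Ix : I01 x) by (unfold I01; lra).
  apply IVT_on with (f := fun z => U x z); [lra| |].
  - intros z Hz. apply rc2_fix1 with (A := Icc e 1); auto. apply contH; auto.
  - simpl. rewrite Uneut_r; auto. split; [lra|].
    assert (U e 1 <= U x 1) by (apply Umono_l; unfold I01; lra).
    rewrite U_e1 in H. lra.
Qed.

Lemma IVT_L x t : Icc 0 e x -> Icc 0 x t -> exists z, Icc 0 e z /\ U x z = t.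
Proof.
  intros Hx Ht. unfold Icc in *.
  assert (Ix : I01 x) by (unfold I01; lra).
  apply IVT_on with (f := fun z => U x z); [lra| |].
  - intros z Hz. apply rc2_fix1 with (A := Icc 0 e); auto. apply contL; auto.
  - simpl. rewrite Uneut_r; auto. split; [|lra].
    assert (U x 0 <= U e 0) by (apply Umono_l; unfold I01; lra).
    rewrite U_e0 in H. destruct (Urange x 0); auto; unfold I01; lra.
Qed.

Lemma idem_abs_H p t : Icc e 1 p -> U p p = p -> Icc p 1 t -> U p t = t.
Proof.
  intros Hp Hpp Ht. destruct (IVT_H p t Hp Ht) as [z [Hz E]].
  unfold Icc in *.
  rewrite <- E. rewrite Uassoc; unfold I01; try lra. rewrite Hpp; auto.
Qed.

Lemma idem_abs_L p t : Icc 0 e p -> U p p = p -> Icc 0 p t -> U p t = t.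
Proof.
  intros Hp Hpp Ht. destruct (IVT_L p t Hp Ht) as [z [Hz E]].
  unfold Icc in *.
  rewrite <- E. rewrite Uassoc; unfold I01; try lra. rewrite Hpp; auto.
Qed.

Lemma lub_pw_idem z p : Icc e 1 z -> is_lub (fun s => exists n, s = pw z n) p -> U p p = p.
Proof.
  intros Hz [Hp1 Hp2]. unfold Icc in Hz.
  assert (Iz : I01 z) by (unfold I01; lra).
  assert (Hep : e <= p) by (apply Hp1; exists O; reflexivity).
  assert (Hp1' : p <= 1).
  { apply Hp2. intros s [n ->]. apply pw_range; auto. }
  assert (Ip : I01 p) by (unfold I01; lra).
  assert (Ge : p <= U p p).
  { rewrite <- (Uneut_l p) at 1; auto. apply Umono_l; auto using Ie. }
  destruct (Rle_lt_or_eq_dec _ _ Ge) as [Lt|Eq]; [|auto].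
  exfalso.
  destruct (contH p p) with (eps := U p p - p) as [d [Hd Hd']]; unfold Icc; try lra.
  assert (Ex : exists n, p - d < pw z n).
  { apply Classical_Pred_Type.not_all_not_ex. intros Hn.
    assert (p <= p - d). { apply Hp2. intros s [n ->]. specialize (Hn n). lra. }
    lra. }
  destruct Ex as [n Hn].
  assert (Hpn : pw z n <= p) by (apply Hp1; exists n; auto).
  assert (Hen : e <= pw z n) by (apply pw_ge_e; [exact Iz|lra]).
  specialize (Hd' (pw z n) (pw z n)).
  rewrite pw_add in Hd'; auto.
  assert (pw z (n + n) <= p) by (apply Hp1; exists (n + n)%nat; auto).
  assert (Rabs (pw z (n + n) - U p p) < U p p - p).
  { apply Hd'; unfold Icc; try lra; rewrite Rabs_left1; lra. }
  apply Rabs_def2 in H0. lra.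
Qed.

Lemma glb_pw_idem z p : Icc 0 e z -> is_glb (fun s => exists n, s = pw z n) p -> U p p = p.
Proof.
  intros Hz [Hp1 Hp2]. unfold Icc in Hz.
  assert (Iz : I01 z) by (unfold I01; lra).
  assert (Hep : p <= e) by (apply Hp1; exists O; reflexivity).
  assert (Hp1' : 0 <= p).
  { apply Hp2. intros s [n ->]. apply pw_range; auto. }
  assert (Ip : I01 p) by (unfold I01; lra).
  assert (Ge : U p p <= p).
  { apply Rle_trans with (U e p); [apply Umono_l; auto using Ie | rewrite Uneut_l; auto; lra]. }
  destruct (Rle_lt_or_eq_dec _ _ Ge) as [Lt|Eq]; [|auto].
  exfalso.
  destruct (contL p p) with (eps := p - U p p) as [d [Hd Hd']]; unfold Icc; try lra.
  assert (Ex : exists n, pw z n < p + d).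
  { apply Classical_Pred_Type.not_all_not_ex. intros Hn.
    assert (p + d <= p). { apply Hp2. intros s [n ->]. specialize (Hn n). lra. }
    lra. }
  destruct Ex as [n Hn].
  assert (Hpn : p <= pw z n) by (apply Hp1; exists n; auto).
  assert (Hen : pw z n <= e) by (apply pw_le_e; [exact Iz|lra]).
  assert (H0n : 0 <= pw z n) by (destruct (pw_range z n); auto).
  specialize (Hd' (pw z n) (pw z n)).
  rewrite pw_add in Hd'; auto.
  assert (p <= pw z (n + n)) by (apply Hp1; exists (n + n)%nat; auto).
  assert (Rabs (pw z (n + n) - U p p) < p - U p p).
  { apply Hd'; unfold Icc; try lra; rewrite Rabs_right; lra. }
  match goal with H : Rabs _ < _ |- _ => apply Rabs_def2 in H end. lra.
Qed.


Lemma U4 x y p q : I01 x -> I01 y -> I01 p -> I01 q -> U (U x p) (U y q) = U (U x y) (U p q).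
Proof.
  intros. rewrite <- (Uassoc x p); try apply Urange; auto.
  rewrite (Uassoc p y q); auto. rewrite (Ucomm p y); auto.
  rewrite <- (Uassoc y p q); auto. rewrite (Uassoc x y); try apply Urange; auto.
Qed.

Lemma T_strict_rev w w' x y : uunit w w' -> I01 x -> I01 y -> U x w < U y w -> x < y.
Proof.
  intros Hw Hx Hy Lt. destruct (Rlt_le_dec x y) as [L|L]; auto.
  destruct Hw as [H1 _]. assert (U y w <= U x w) by (apply Umono_l; auto). lra.
Qed.

Lemma rc1_id A x : rc1 (fun z => z) A x.
Proof. intros eps Heps. exists eps. split; auto. Qed.

Section Mid.
Variables u v : R.
Hypothesis Huv : uunit u v.
Hypothesis Heu : e < u.
Variables a d : R.
Hypothesis Hd : is_lub (fun s => exists n, s = pw u n) d.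
Hypothesis Ha : is_glb (fun s => exists n, s = pw v n) a.

Lemma Iu : I01 u. Proof. destruct Huv; auto. Qed.
Lemma Iv : I01 v. Proof. destruct Huv as [_ [H _]]; auto. Qed.
Lemma Hve : v < e.
Proof.
  destruct Huv as [H1 [H2 H3]]. destruct (Rlt_le_dec v e) as [L|L]; auto.
  assert (U u e <= U u v) by (apply Umono_r; auto using Ie).
  rewrite Uneut_r in H; auto. lra.
Qed.

Lemma pu_unit n : uunit (pw u n) (pw v n).
Proof. apply pw_unit; auto. Qed.
Lemma pv_unit n : uunit (pw v n) (pw u n).
Proof. apply unit_sym, pw_unit; auto. Qed.
Lemma Ipu n : I01 (pw u n). Proof. apply pw_range, Iu. Qed.
Lemma Ipv n : I01 (pw v n). Proof. apply pw_range, Iv. Qed.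

Lemma pu_strict n : pw u n < pw u (S n).
Proof.
  induction n.
  - simpl. rewrite Uneut_l; auto using Iu.
  - change (pw u (S n) < U (pw u (S n)) u). change (pw u (S n)) with (U (pw u n) u) at 1.
    apply (T_strict u v); auto using Ipu.
Qed.

Lemma pv_strict n : pw v (S n) < pw v n.
Proof.
  induction n.
  - simpl. rewrite Uneut_l; auto using Iv. apply Hve.
  - change (U (pw v (S n)) v < pw v (S n)). change (pw v (S n)) with (U (pw v n) v) at 2.
    apply (T_strict v u); auto using Ipv. apply unit_sym; auto.
Qed.

Lemma pu_lt_d n : pw u n < d.
Proof.
  destruct Hd as [H1 _]. eapply Rlt_le_trans; [apply pu_strict|]. apply H1. exists (S n); auto.
Qed.
Lemma pv_gt_a n : a < pw v n.
Proof.
  destruct Ha as [H1 _]. eapply Rle_lt_trans; [|apply pv_strict]. apply H1. exists (S n); auto.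
Qed.
Lemma e_lt_d : e < d. Proof. apply (pu_lt_d O). Qed.
Lemma a_lt_e : a < e. Proof. apply (pv_gt_a O). Qed.
Lemma u_lt_d : u < d.
Proof. assert (H := pu_lt_d 1). simpl in H. rewrite Uneut_l in H; auto using Iu. Qed.
Lemma a_lt_v : a < v.
Proof. assert (H := pv_gt_a 1). simpl in H. rewrite Uneut_l in H; auto using Iv. Qed.
Lemma d_le_1 : d <= 1.
Proof. destruct Hd as [_ H2]. apply H2. intros s [n ->]. destruct (Ipu n); auto. Qed.
Lemma a_ge_0 : 0 <= a.
Proof. destruct Ha as [_ H2]. apply H2. intros s [n ->]. destruct (Ipv n); auto. Qed.

Lemma lt_d x : x < d -> exists n, x < pw u n.
Proof.
  intros Hx. apply Classical_Pred_Type.not_all_not_ex. intros Hn.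
  destruct Hd as [_ H2]. assert (d <= x).
  { apply H2. intros s [n ->]. specialize (Hn n). lra. }
  lra.
Qed.
Lemma gt_a x : a < x -> exists n, pw v n < x.
Proof.
  intros Hx. apply Classical_Pred_Type.not_all_not_ex. intros Hn.
  destruct Ha as [_ H2]. assert (x <= a).
  { apply H2. intros s [n ->]. specialize (Hn n). lra. }
  lra.
Qed.

Lemma d_idem : U d d = d.
Proof. apply (lub_pw_idem u); auto. unfold Icc. destruct Iu. lra. Qed.
Lemma a_idem : U a a = a.
Proof. apply (glb_pw_idem v); auto. unfold Icc. destruct Iv. pose proof Hve. lra. Qed.

Definition inM x := a < x < d.
Lemma inM_I01 x : inM x -> I01 x.
Proof. unfold inM, I01. pose proof a_ge_0. pose proof d_le_1. lra. Qed.
Lemma inM_pu n : inM (pw u n).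
Proof. split; [|apply pu_lt_d]. pose proof a_lt_e. pose proof (pw_ge_e u n Iu). lra. Qed.
Lemma inM_pv n : inM (pw v n).
Proof. split; [apply pv_gt_a|]. pose proof e_lt_d. pose proof (pw_le_e v n Iv). pose proof Hve. lra. Qed.
Lemma inM_e : inM e.
Proof. split; [apply a_lt_e|apply e_lt_d]. Qed.

Lemma inM_U x y : inM x -> inM y -> inM (U x y).
Proof.
  intros Hx Hy. assert (Ix := inM_I01 x Hx). assert (Iy := inM_I01 y Hy).
  destruct (lt_d x) as [n Hn]; [apply Hx|]. destruct (lt_d y) as [m Hm]; [apply Hy|].
  destruct (gt_a x) as [n' Hn']; [apply Hx|]. destruct (gt_a y) as [m' Hm']; [apply Hy|].
  split.
  - apply Rlt_le_trans with (pw v (n' + m')). apply pv_gt_a.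
    rewrite <- pw_add; auto using Iv. apply Umono; auto using Ipv; lra.
  - apply Rle_lt_trans with (pw u (n + m)); [|apply pu_lt_d].
    rewrite <- pw_add; auto using Iu. apply Umono; auto using Ipu; lra.
Qed.

Lemma d_abs x : Icc d 1 x -> U x d = x.
Proof.
  intros Hx. pose proof e_lt_d. pose proof d_le_1. unfold Icc in Hx.
  rewrite Ucomm; try (unfold I01; lra). apply idem_abs_H; auto using d_idem; unfold Icc; lra.
Qed.
Lemma a_abs x : Icc 0 a x -> U x a = x.
Proof.
  intros Hx. pose proof a_lt_e. pose proof a_ge_0. unfold Icc in Hx.
  rewrite Ucomm; try (unfold I01; lra). apply idem_abs_L; auto using a_idem; unfold Icc; lra.
Qed.

Lemma outer_fix x : in_outer a d x -> U x u = x /\ U x v = x.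
Proof.
  intros Hx. pose proof e_lt_d. pose proof d_le_1. pose proof a_lt_e. pose proof a_ge_0.
  pose proof u_lt_d. pose proof a_lt_v. pose proof Hve.
  assert (Ix : I01 x) by (unfold in_outer, I01 in *; lra).
  destruct Hx as [Hx|Hx].
  - assert (E : U x v = x).
    { apply Rle_antisym.
      + rewrite <- (Uneut_r x) at 2; auto. apply Umono_r; auto using Iv, Ie; lra.
      + rewrite <- (a_abs x) at 1; [|unfold Icc; lra]. apply Umono_r; auto using Iv; unfold I01; lra. }
    split; auto. rewrite <- E at 1. apply (T_inv v u); auto. apply unit_sym; auto.
  - assert (E : U x u = x).
    { apply Rle_antisym.
      + rewrite <- (d_abs x) at 2; [|unfold Icc; lra]. apply Umono_r; auto using Iu; unfold I01; lra.
      + rewrite <- (Uneut_r x) at 1; auto. apply Umono_r; auto using Iu, Ie; lra. }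
    split; auto. rewrite <- E at 1. apply (T_inv u v); auto.
Qed.

Lemma no_idem p : e < p < d -> U p p = p -> False.
Proof.
  intros Hp Hpp. destruct (lt_d p) as [n Hn]; [lra|].
  pose proof d_le_1.
  assert (E : U p (pw u n) = pw u n).
  { apply idem_abs_H; auto; unfold Icc; try lra. destruct (Ipu n); lra. }
  assert (E2 : U e (pw u n) = pw u n) by (apply Uneut_l, Ipu).
  assert (E3 : U p (pw u n) = U e (pw u n)) by (rewrite E, E2; auto).
  apply (T_inj (pw u n) (pw v n)) in E3; auto using pu_unit, Ie.
  lra. unfold I01; lra.
Qed.

Lemma to_H x : inM x -> exists n, e < U x (pw u n) /\ inM (U x (pw u n)).
Proof.
  intros Hx. destruct (gt_a x) as [n Hn]; [apply Hx|]. exists n. split.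
  - destruct (pv_unit n) as [_ [_ E]]. rewrite <- E.
    apply (T_strict (pw u n) (pw v n)); auto using pu_unit, Ipv, inM_I01.
  - apply inM_U; auto using inM_pu.
Qed.

Lemma to_L x : inM x -> exists n, U x (pw v n) < e /\ inM (U x (pw v n)).
Proof.
  intros Hx. destruct (lt_d x) as [n Hn]; [apply Hx|]. exists n. split.
  - destruct (pu_unit n) as [_ [_ E]]. rewrite <- E.
    apply (T_strict (pw v n) (pw u n)); auto using pv_unit, Ipu, inM_I01.
  - apply inM_U; auto using inM_pv.
Qed.

Lemma strict_H x x' y : e <= x -> x < x' -> x' < d -> e <= y -> y < d -> U x y < U x' y.
Proof.
  intros H1 H2 H3 H4 H5. pose proof d_le_1. pose proof a_lt_e.
  assert (Ix : I01 x) by (unfold I01; lra). assert (Ix' : I01 x') by (unfold I01; lra).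
  assert (Iy : I01 y) by (unfold I01; lra).
  destruct (IVT_H x x') as [z [Hz Ez]]; unfold Icc; try lra.
  assert (Iz : I01 z) by (unfold Icc, I01 in *; lra).
  assert (Hle : U x y <= U x' y) by (apply Umono_l; auto; lra).
  destruct Hle as [Lt|Eq]; auto. exfalso.
  set (w := U x y).
  assert (Iw : I01 w) by (apply Urange; auto).
  assert (Wz : U w z = w).
  { unfold w. transitivity (U x' y); [|symmetry; exact Eq]. rewrite <- Ez.
    rewrite <- (Uassoc x y z), <- (Uassoc x z y); auto. rewrite (Ucomm y z); auto. }
  assert (Wn : forall n, U w (pw z n) = w).
  { induction n; simpl. apply Uneut_r; auto.
    rewrite Uassoc; auto using pw_range. rewrite IHn; auto. }
  assert (ze : e < z).
  { destruct (Rle_lt_or_eq_dec e z) as [L|L]; [unfold Icc in Hz; lra|auto|].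
    subst z. rewrite Uneut_r in Ez; auto. lra. }
  assert (wM : inM w) by (apply inM_U; unfold inM; lra).
  destruct (completeness (fun s => exists n, s = pw z n)) as [p Hp].
  { exists 1. intros s [n ->]. destruct (pw_range z n); auto. }
  { exists e. exists O. auto. }
  assert (pz : z <= p). { apply (proj1 Hp). exists 1%nat. simpl. rewrite Uneut_l; auto. }
  assert (pw' : p <= w).
  { assert (we : e <= w).
    { unfold w. apply Rle_trans with (U e e). rewrite Uneut_l; auto using Ie; lra.
      apply Umono; auto using Ie; lra. }
    apply (proj2 Hp). intros s [n ->]. rewrite <- (Wn n).
    apply Rle_trans with (U e (pw z n)). rewrite Uneut_l; auto using pw_range; lra.
    apply Umono_l; auto using Ie, pw_range. }
  apply (no_idem p). unfold inM in wM. lra.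
  apply (lub_pw_idem z); auto.
Qed.

Lemma strict_M x x' y : inM x -> inM x' -> inM y -> x < x' -> U x y < U x' y.
Proof.
  intros Hx Hx' Hy Lt.
  destruct (to_H x Hx) as [n [Xe XM]]. destruct (to_H y Hy) as [m [Ye YM]].
  assert (Ix := inM_I01 _ Hx). assert (Ix' := inM_I01 _ Hx'). assert (Iy := inM_I01 _ Hy).
  assert (X'M : inM (U x' (pw u n))) by (apply inM_U; auto using inM_pu).
  assert (XX : U x (pw u n) < U x' (pw u n)) by (apply (T_strict _ (pw v n)); auto using pu_unit).
  assert (K : U (U x (pw u n)) (U y (pw u m)) < U (U x' (pw u n)) (U y (pw u m))).
  { apply strict_H; try lra; apply XM || apply X'M || apply YM. }
  rewrite (U4 x y (pw u n) (pw u m)), (U4 x' y (pw u n) (pw u m)) in K; auto using Ipu.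
  apply (T_strict_rev (U (pw u n) (pw u m)) (U (pw v n) (pw v m))); auto using Urange, Ipu.
  apply unit_mul; apply pu_unit.
Qed.

Lemma CL x y : 0 <= x < d -> Icc 0 e y -> rc2 U I01 (Icc 0 e) x y.
Proof.
  intros Hx Hy. pose proof d_le_1.
  destruct (Rlt_le_dec x e) as [L|L].
  - apply rc2_local with (r := e - x); [lra|].
    apply rc2_sub with (A := Icc 0 e) (B := Icc 0 e); auto.
    + intros z [Hz1 Hz2]. apply Rabs_def2 in Hz2. unfold Icc, I01 in *. lra.
    + apply contL; auto. unfold Icc; lra.
  - destruct (lt_d x) as [n Hn]; [lra|].
    assert (Ix : I01 x) by (unfold I01; lra).
    set (X := U x (pw v n)).
    assert (XL : X < e).
    { destruct (pu_unit n) as [_ [_ E]]. rewrite <- E. unfold X.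
      apply (T_strict (pw v n) (pw u n)); auto using pv_unit, Ipu. }
    assert (IX : I01 X) by (apply Urange; auto using Ipv).
    destruct (T_cont (pw v n) (pw u n) x (pv_unit n) Ix (e - X)) as [d1 [Hd1 Hd1']]; [lra|].
    apply rc2_local with (r := d1); [auto|].
    set (G := fun p q => U (U (U p (pw v n)) q) (pw u n)).
    assert (HG : rc2 G (fun z => I01 z /\ Rabs (z - x) < d1) (Icc 0 e) x y).
    { unfold G. apply (rc1_post2 (fun z => U z (pw u n)) I01 (fun p q => U (U p (pw v n)) q)).
      - apply (T_cont (pw u n) (pw v n)); auto using pu_unit. apply Urange; auto.
        unfold Icc, I01 in *; lra.
      - apply (rc2_comp U (Icc 0 e) (Icc 0 e) _ _ (fun p => U p (pw v n)) (fun q => q)).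
        + apply contL; [unfold Icc; fold X; destruct IX; lra | exact Hy].
        + apply rc1_sub with (A := I01). intros z [Hz _]; auto.
          apply (T_cont (pw v n) (pw u n)); auto using pv_unit.
        + apply rc1_id.
        + intros z [Hz Hz2]. specialize (Hd1' z Hz Hz2). fold X in Hd1'.
          apply Rabs_def2 in Hd1'. destruct (Urange z (pw v n)); auto using Ipv.
          unfold Icc; lra.
        + auto.
      - intros p q [Hp _] Hq. apply Urange; auto. apply Urange; auto using Ipv.
        unfold Icc, I01 in *; lra. }
    eapply rc2_ext; [| |  |exact HG].
    + split; auto. replace (x - x) with 0 by ring. rewrite Rabs_R0; auto.
    + auto.
    + intros p q [Hp _] Hq. unfold G. assert (Iq : I01 q) by (unfold Icc, I01 in *; lra).
      rewrite <- (Uassoc p), (Ucomm (pw v n) q), (Uassoc p q); auto using Ipv.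
      apply (T_inv (pw v n) (pw u n)); auto using pv_unit, Urange.
Qed.

Lemma CH x y : a < x <= 1 -> Icc e 1 y -> rc2 U I01 (Icc e 1) x y.
Proof.
  intros Hx Hy. pose proof a_ge_0.
  destruct (Rlt_le_dec e x) as [L|L].
  - apply rc2_local with (r := x - e); [lra|].
    apply rc2_sub with (A := Icc e 1) (B := Icc e 1); auto.
    + intros z [Hz1 Hz2]. apply Rabs_def2 in Hz2. unfold Icc, I01 in *. lra.
    + apply contH; auto. unfold Icc; lra.
  - destruct (gt_a x) as [n Hn]; [lra|].
    assert (Ix : I01 x) by (unfold I01; lra).
    set (X := U x (pw u n)).
    assert (XL : e < X).
    { destruct (pv_unit n) as [_ [_ E]]. rewrite <- E. unfold X.
      apply (T_strict (pw u n) (pw v n)); auto using pu_unit, Ipv. }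
    assert (IX : I01 X) by (apply Urange; auto using Ipu).
    destruct (T_cont (pw u n) (pw v n) x (pu_unit n) Ix (X - e)) as [d1 [Hd1 Hd1']]; [lra|].
    apply rc2_local with (r := d1); [auto|].
    set (G := fun p q => U (U (U p (pw u n)) q) (pw v n)).
    assert (HG : rc2 G (fun z => I01 z /\ Rabs (z - x) < d1) (Icc e 1) x y).
    { unfold G. apply (rc1_post2 (fun z => U z (pw v n)) I01 (fun p q => U (U p (pw u n)) q)).
      - apply (T_cont (pw v n) (pw u n)); auto using pv_unit. apply Urange; auto.
        unfold Icc, I01 in *; lra.
      - apply (rc2_comp U (Icc e 1) (Icc e 1) _ _ (fun p => U p (pw u n)) (fun q => q)).
        + apply contH; [unfold Icc; fold X; destruct IX; lra | exact Hy].
        + apply rc1_sub with (A := I01). intros z [Hz _]; auto.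
          apply (T_cont (pw u n) (pw v n)); auto using pu_unit.
        + apply rc1_id.
        + intros z [Hz Hz2]. specialize (Hd1' z Hz Hz2). fold X in Hd1'.
          apply Rabs_def2 in Hd1'. destruct (Urange z (pw u n)); auto using Ipu.
          unfold Icc; lra.
        + auto.
      - intros p q [Hp _] Hq. apply Urange; auto. apply Urange; auto using Ipu.
        unfold Icc, I01 in *; lra. }
    eapply rc2_ext; [| |  |exact HG].
    + split; auto. replace (x - x) with 0 by ring. rewrite Rabs_R0; auto.
    + auto.
    + intros p q [Hp _] Hq. unfold G. assert (Iq : I01 q) by (unfold Icc, I01 in *; lra).
      rewrite <- (Uassoc p), (Ucomm (pw u n) q), (Uassoc p q); auto using Ipu.
      apply (T_inv (pw u n) (pw v n)); auto using pu_unit, Urange.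
Qed.

Lemma root_ex y : exists z, e <= y <= 1 -> e <= z <= y /\ U z z = y.
Proof.
  destruct (Classical_Prop.classic (e <= y <= 1)) as [Hy|Hy]; [|exists 0; tauto].
  assert (Iy : I01 y) by (unfold I01; lra).
  destruct (IVT_on (fun z => U z z) e y y) as [z [Hz E]]; [lra| | |].
  - intros z Hz. apply rc2_diag. apply rc2_sub with (A := Icc e 1) (B := Icc e 1).
    + unfold Icc; intros; lra.
    + unfold Icc; intros; lra.
    + apply contH; unfold Icc in *; lra.
  - simpl. rewrite Uneut_l; auto using Ie. split; [lra|].
    rewrite <- (Uneut_l y) at 1; auto. apply Umono_l; auto using Ie. lra.
  - exists z. intros _. unfold Icc in Hz. split; auto.
Qed.

Definition sq (y : R) : R := proj1_sig (constructive_indefinite_description _ (root_ex y)).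
Lemma sq_spec y : e <= y <= 1 -> e <= sq y <= y /\ U (sq y) (sq y) = y.
Proof. unfold sq. destruct constructive_indefinite_description as [z Hz]. simpl. auto. Qed.

Fixpoint r (k : nat) : R := match k with O => u | S k => sq (r k) end.

Lemma r_range k : e < r k <= u.
Proof.
  pose proof Iu as [_ Hu1]. induction k; simpl; [lra|].
  destruct (sq_spec (r k)) as [H1 H2]; [lra|].
  split; [|lra]. destruct (Rle_lt_or_eq_dec e (sq (r k))) as [L|L]; [lra|auto|].
  rewrite <- L in H2. rewrite Uneut_l in H2; auto using Ie. lra.
Qed.
Lemma r_sq k : U (r (S k)) (r (S k)) = r k.
Proof. simpl. pose proof (r_range k). pose proof Iu as [_ Hu1]. apply sq_spec; lra. Qed.
Lemma Ir k : I01 (r k).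
Proof. pose proof (r_range k). pose proof Iu as [_ Hu1]. unfold I01; lra. Qed.
Lemma inM_r k : inM (r k).
Proof. pose proof (r_range k). pose proof u_lt_d. pose proof a_lt_e. unfold inM; lra. Qed.

Lemma pw1 w : I01 w -> pw w 1 = w.
Proof. intros. simpl. apply Uneut_l; auto. Qed.

Lemma r_pow k : pw (r k) (2 ^ k) = u.
Proof.
  induction k.
  - simpl. apply Uneut_l, Iu.
  - rewrite Nat.pow_succ_r'. replace (2 * 2 ^ k)%nat with (2 ^ k + 2 ^ k)%nat by lia.
    rewrite <- pw_sq; auto using Ir. rewrite r_sq. auto.
Qed.

Definition r' (k : nat) : R := U (pw (r k) (2 ^ k - 1)) v.

Lemma r_unit k : uunit (r k) (r' k).
Proof.
  split; [apply Ir|split].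
  - unfold r'. apply Urange; auto using pw_range, Ir, Iv.
  - unfold r'. rewrite Uassoc; auto using pw_range, Ir, Iv.
    rewrite <- (pw1 (r k)) at 1; auto using Ir. rewrite pw_add; auto using Ir.
    replace (1 + (2 ^ k - 1))%nat with (2 ^ k)%nat.
    + rewrite r_pow. destruct Huv as [_ [_ E]]. auto.
    + assert (0 < 2 ^ k)%nat by (apply Nat.neq_0_lt_0, Nat.pow_nonzero; lia). lia.
Qed.

Lemma inM_pw w n : inM w -> inM (pw w n).
Proof. intros Hw. induction n; simpl; auto using inM_e. apply inM_U; auto. Qed.

Lemma inM_r' k : inM (r' k).
Proof. unfold r'. apply inM_U; [apply inM_pw, inM_r|]. pose proof (inM_pv 1%nat) as H. simpl in H. rewrite Uneut_l in H; auto using Iv. Qed.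

Definition pwZ (w w' : R) (m : Z) : R :=
  if Z_le_dec 0 m then pw w (Z.to_nat m) else pw w' (Z.to_nat (- m)).

Lemma IpwZ w w' m : I01 w -> I01 w' -> I01 (pwZ w w' m).
Proof. intros. unfold pwZ. destruct Z_le_dec; apply pw_range; auto. Qed.

Lemma pwZ_succ w w' m : uunit w w' -> pwZ w w' (m + 1) = U (pwZ w w' m) w.
Proof.
  intros Hw. pose proof Hw as [H1 [H2 H3]]. unfold pwZ.
  destruct (Z_le_dec 0 (m + 1)); destruct (Z_le_dec 0 m).
  - replace (Z.to_nat (m + 1)) with (S (Z.to_nat m)) by lia. reflexivity.
  - assert (m = -1)%Z by lia. subst. simpl. rewrite Uneut_l; auto. rewrite Ucomm; auto; try (symmetry; auto).
  - lia.
  - replace (Z.to_nat (- m)) with (S (Z.to_nat (- (m + 1)))) by lia. simpl.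
    symmetry. apply (T_inv w' w); auto using pw_range. apply unit_sym; auto.
Qed.

Lemma pwZ_pred w w' m : uunit w w' -> pwZ w w' (m - 1) = U (pwZ w w' m) w'.
Proof.
  intros Hw. pose proof Hw as [H1 [H2 H3]].
  replace (pwZ w w' m) with (pwZ w w' (m - 1 + 1)) by (f_equal; lia).
  rewrite pwZ_succ; auto. symmetry. apply (T_inv w w'); auto using IpwZ.
Qed.

Lemma pwZ_add w w' m n : uunit w w' -> pwZ w w' (m + n) = U (pwZ w w' m) (pwZ w w' n).
Proof.
  intros Hw. pose proof Hw as [H1 [H2 H3]]. revert n. apply Z.peano_ind.
  - rewrite Z.add_0_r. unfold pwZ at 3. simpl. rewrite Uneut_r; auto using IpwZ.
  - intros n IH. rewrite <- Z.add_1_r. rewrite Z.add_assoc, !pwZ_succ, IH; auto.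
    rewrite Uassoc; auto using IpwZ.
  - intros n IH. rewrite <- Z.sub_1_r.
    replace (m + (n - 1))%Z with (m + n - 1)%Z by lia.
    rewrite !pwZ_pred, IH; auto. rewrite Uassoc; auto using IpwZ.
Qed.

Lemma pwZ_M w w' m : inM w -> inM w' -> inM (pwZ w w' m).
Proof. intros. unfold pwZ. destruct Z_le_dec; apply inM_pw; auto. Qed.

Lemma pwZ_double w w' m : I01 w -> I01 w' ->
  pwZ (U w w) (U w' w') m = pwZ w w' (2 * m).
Proof.
  intros. unfold pwZ. destruct (Z_le_dec 0 m); destruct (Z_le_dec 0 (2 * m)); try lia.
  - rewrite pw_sq; auto. f_equal. lia.
  - rewrite pw_sq; auto. f_equal. lia.
Qed.

Definition P (m : Z) (k : nat) : R := pwZ (r k) (r' k) m.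

Lemma IP m k : I01 (P m k). Proof. apply IpwZ; apply inM_I01; auto using inM_r, inM_r'. Qed.
Lemma inM_P m k : inM (P m k). Proof. apply pwZ_M; auto using inM_r, inM_r'. Qed.

Lemma r'_sq k : U (r' (S k)) (r' (S k)) = r' k.
Proof.
  apply (unit_inv_unique (r k)); [|apply r_unit].
  rewrite <- r_sq. apply unit_mul; apply r_unit.
Qed.

Lemma P_step m k : P (2 * m) (S k) = P m k.
Proof.
  unfold P. rewrite <- pwZ_double. rewrite r_sq, r'_sq. auto.
  apply Ir. apply inM_I01, inM_r'.
Qed.

Lemma P_lvl m k j : P (m * 2 ^ Z.of_nat j) (k + j) = P m k.
Proof.
  induction j.
  - simpl. rewrite Z.mul_1_r, Nat.add_0_r. auto.
  - rewrite Nat.add_succ_r. rewrite Nat2Z.inj_succ, Z.pow_succ_r by lia.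
    replace (m * (2 * 2 ^ Z.of_nat j))%Z with (2 * (m * 2 ^ Z.of_nat j))%Z by ring.
    rewrite P_step. auto.
Qed.

Lemma P_succ m k : P (m + 1) k = U (P m k) (r k).
Proof. unfold P. apply pwZ_succ, r_unit. Qed.

Lemma P_incr m k : P m k < P (m + 1) k.
Proof.
  rewrite P_succ. rewrite <- (Uneut_l (P m k)) at 1; auto using IP.
  rewrite (Ucomm (P m k)); auto using IP, Ir.
  apply strict_M; auto using inM_e, inM_r, inM_P. apply r_range.
Qed.

Lemma P_monoZ m m' k : (m < m')%Z -> P m k < P m' k.
Proof.
  intros Lt. replace m' with (m + Z.of_nat (S (Z.to_nat (m' - m - 1))))%Z by lia.
  generalize (Z.to_nat (m' - m - 1)). intros t. induction t.
  - simpl. apply P_incr.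
  - eapply Rlt_trans; [exact IHt|].
    replace (m + Z.of_nat (S (S t)))%Z with (m + Z.of_nat (S t) + 1)%Z by lia. apply P_incr.
Qed.

Definition dv (m : Z) (k : nat) : R := IZR m / 2 ^ k.

Lemma pow2_pos k : 0 < 2 ^ k.
Proof. apply pow_lt. lra. Qed.

Lemma dv_lvl m k j : dv (m * 2 ^ Z.of_nat j) (k + j) = dv m k.
Proof.
  unfold dv. rewrite mult_IZR, <- pow_IZR, pow_add.
  pose proof (pow2_pos k). pose proof (pow2_pos j). field. lra.
Qed.

Lemma common m k m' k' : P m k = P (m * 2 ^ Z.of_nat k') (k + k') /\
  P m' k' = P (m' * 2 ^ Z.of_nat k) (k + k') /\
  dv m k = dv (m * 2 ^ Z.of_nat k') (k + k') /\ dv m' k' = dv (m' * 2 ^ Z.of_nat k) (k + k').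
Proof.
  rewrite (Nat.add_comm k k') at 2 4. rewrite !P_lvl, !dv_lvl. auto.
Qed.

Lemma dv_lt_Z m m' k : dv m k < dv m' k -> (m < m')%Z.
Proof.
  unfold dv. intros H. apply lt_IZR. pose proof (pow2_pos k).
  apply Rmult_lt_reg_r with (/ 2 ^ k). apply Rinv_0_lt_compat; auto. exact H.
Qed.
Lemma dv_le_Z m m' k : dv m k <= dv m' k -> (m <= m')%Z.
Proof.
  unfold dv. intros H. apply le_IZR. pose proof (pow2_pos k).
  apply Rmult_le_reg_r with (/ 2 ^ k). apply Rinv_0_lt_compat; auto. exact H.
Qed.

Lemma P_lt m k m' k' : dv m k < dv m' k' -> P m k < P m' k'.
Proof.
  intros H. destruct (common m k m' k') as [E1 [E2 [E3 E4]]].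
  rewrite E3, E4 in H. rewrite E1, E2. apply P_monoZ. apply dv_lt_Z in H. auto.
Qed.
Lemma P_le m k m' k' : dv m k <= dv m' k' -> P m k <= P m' k'.
Proof.
  intros H. destruct (common m k m' k') as [E1 [E2 [E3 E4]]].
  rewrite E3, E4 in H. rewrite E1, E2. apply dv_le_Z in H.
  destruct (Z_lt_le_dec (m * 2 ^ Z.of_nat k') (m' * 2 ^ Z.of_nat k)) as [L|L].
  - left. apply P_monoZ; auto.
  - right. assert (E : (m * 2 ^ Z.of_nat k' = m' * 2 ^ Z.of_nat k)%Z) by lia. rewrite E. auto.
Qed.

Lemma P_add m m' k : U (P m k) (P m' k) = P (m + m') k.
Proof. unfold P. rewrite pwZ_add; auto. apply r_unit. Qed.

Lemma P_0 k : P 0 k = e.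
Proof. reflexivity. Qed.
Lemma P_1 k : P 1 k = r k.
Proof. unfold P, pwZ. simpl. apply Uneut_l, Ir. Qed.
Lemma P_m1 k : P (-1) k = r' k.
Proof. unfold P, pwZ. simpl. apply Uneut_l, inM_I01, inM_r'. Qed.
Lemma P_nat n : P (Z.of_nat n) 0 = pw u n.
Proof. unfold P, pwZ. destruct Z_le_dec; [|lia]. rewrite Nat2Z.id. reflexivity. Qed.
Lemma r'0 : r' 0 = v.
Proof. unfold r'. simpl. apply Uneut_l, Iv. Qed.
Lemma P_negnat n : P (- Z.of_nat n) 0 = pw v n.
Proof.
  unfold P, pwZ. destruct Z_le_dec.
  - assert (n = O) by lia. subst. reflexivity.
  - rewrite Z.opp_involutive, Nat2Z.id, r'0. reflexivity.
Qed.

Lemma dv_add m m' k : dv (m + m') k = dv m k + dv m' k.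
Proof. unfold dv. rewrite plus_IZR. field. pose proof (pow2_pos k). lra. Qed.
Lemma dv_1 k : dv 1 k = / 2 ^ k.
Proof. unfold dv. field. pose proof (pow2_pos k). lra. Qed.
Lemma dv_0 k : dv 0 k = 0.
Proof. unfold dv. field. pose proof (pow2_pos k). lra. Qed.
Lemma dv_nat n : dv (Z.of_nat n) 0 = INR n.
Proof. unfold dv. simpl. rewrite <- INR_IZR_INZ. field. Qed.

Lemma density z k : exists m, dv m k <= z < dv (m + 1) k.
Proof.
  destruct (archimed (z * 2 ^ k)) as [H1 H2].
  exists (up (z * 2 ^ k) - 1)%Z. pose proof (pow2_pos k).
  unfold dv. rewrite minus_IZR, plus_IZR, minus_IZR. simpl.
  split.
  - apply Rmult_le_reg_r with (2 ^ k); auto. unfold Rdiv. rewrite Rmult_assoc, Rinv_l; lra.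
  - apply Rmult_lt_reg_r with (2 ^ k); auto. unfold Rdiv. rewrite Rmult_assoc, Rinv_l; lra.
Qed.

Lemma INR_lt_pow2 n : INR n < 2 ^ n.
Proof.
  induction n; [simpl; lra|]. rewrite S_INR. change (2 ^ S n) with (2 * 2 ^ n).
  assert (1 <= 2 ^ n) by (apply pow_R1_Rle; lra). lra.
Qed.

Lemma pow2_small eps : 0 < eps -> exists k, / 2 ^ k < eps.
Proof.
  intros Heps. destruct (archimed (/ eps)) as [H1 _].
  assert (Hp : 0 < / eps) by (apply Rinv_0_lt_compat; auto).
  assert (HN : (0 < up (/ eps))%Z) by (apply lt_IZR; lra).
  exists (Z.to_nat (up (/ eps))).
  assert (E : INR (Z.to_nat (up (/ eps))) = IZR (up (/ eps))).
  { rewrite INR_IZR_INZ, Z2Nat.id; auto. lia. }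
  pose proof (INR_lt_pow2 (Z.to_nat (up (/ eps)))) as K.
  set (t := 2 ^ Z.to_nat (up (/ eps))) in *.
  assert (Ht : / eps < t) by lra.
  assert (Ht0 : 0 < t) by lra.
  assert (E1 : eps * / eps = 1) by (field; lra).
  assert (E2 : t * / t = 1) by (field; lra).
  assert (1 < eps * t) by nra.
  assert (0 < / t) by (apply Rinv_0_lt_compat; auto).
  nra.
Qed.

Definition Sset (x : R) (q : R) : Prop := exists m k, q = dv m k /\ P m k <= x.
Definition Hf (x : R) : R := epsilon (inhabits 0) (is_lub (Sset x)).

Lemma H_lub x : inM x -> is_lub (Sset x) (Hf x).
Proof.
  intros Hx. unfold Hf. apply epsilon_spec.
  destruct (lt_d x) as [n Hn]; [apply Hx|]. destruct (gt_a x) as [n' Hn']; [apply Hx|].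
  destruct (completeness (Sset x)) as [l Hl].
  - exists (dv (Z.of_nat n) 0). intros q [m [k [-> Hm]]].
    destruct (Rle_lt_dec (dv m k) (dv (Z.of_nat n) 0)) as [L|L]; auto.
    apply P_lt in L. rewrite P_nat in L. lra.
  - exists (dv (- Z.of_nat n') 0). exists (- Z.of_nat n')%Z, O. split; auto.
    rewrite P_negnat. lra.
  - exists l; auto.
Qed.

Lemma H_ge x m k : inM x -> P m k <= x -> dv m k <= Hf x.
Proof. intros Hx H. apply (H_lub x Hx). exists m, k. auto. Qed.

Lemma H_le x m k : inM x -> x < P m k -> Hf x <= dv m k.
Proof.
  intros Hx H. apply (H_lub x Hx). intros q [m' [k' [-> Hm]]].
  destruct (Rle_lt_dec (dv m' k') (dv m k)) as [L|L]; auto.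
  apply P_lt in L. lra.
Qed.

Lemma H_P m k : Hf (P m k) = dv m k.
Proof.
  apply Rle_antisym.
  - apply (H_lub _ (inM_P m k)). intros q [m' [k' [-> Hm]]].
    destruct (Rle_lt_dec (dv m' k') (dv m k)) as [L|L]; auto.
    apply P_lt in L. lra.
  - apply H_ge; auto using inM_P. lra.
Qed.

Lemma H_mono x y : inM x -> inM y -> x <= y -> Hf x <= Hf y.
Proof.
  intros Hx Hy Le. apply (H_lub x Hx). intros q [m [k [-> Hm]]].
  apply H_ge; auto. lra.
Qed.

Lemma H_lt_P x m k : inM x -> dv m k < Hf x -> P m k <= x.
Proof.
  intros Hx H. destruct (Rle_lt_dec (P m k) x) as [L|L]; auto.
  apply H_le in L; auto. lra.
Qed.
Lemma H_gt_P x m k : inM x -> Hf x < dv m k -> x < P m k.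
Proof.
  intros Hx H. destruct (Rle_lt_dec (P m k) x) as [L|L]; auto.
  apply H_ge in L; auto. lra.
Qed.

Lemma H_e : Hf e = 0.
Proof. rewrite <- (P_0 0), H_P. apply dv_0. Qed.

Lemma H_add x y : inM x -> inM y -> Hf (U x y) = Hf x + Hf y.
Proof.
  intros Hx Hy. assert (Ix := inM_I01 _ Hx). assert (Iy := inM_I01 _ Hy).
  assert (HM : inM (U x y)) by (apply inM_U; auto).
  assert (B : forall k, Rabs (Hf (U x y) - (Hf x + Hf y)) <= 4 * / 2 ^ k).
  { intros k.
    destruct (density (Hf x) k) as [m1 [A1 B1]].
    destruct (density (Hf y) k) as [m2 [A2 B2]].
    rewrite dv_add, dv_1 in B1, B2.
    assert (L1 : P (m1 - 1) k <= x).
    { apply H_lt_P; auto. replace (m1 - 1)%Z with (m1 + -1)%Z by lia.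
      rewrite dv_add. pose proof (pow2_pos k).
      assert (dv (-1) k = - / 2 ^ k) by (unfold dv; field; lra). lra. }
    assert (L2 : P (m2 - 1) k <= y).
    { apply H_lt_P; auto. replace (m2 - 1)%Z with (m2 + -1)%Z by lia.
      rewrite dv_add. pose proof (pow2_pos k).
      assert (dv (-1) k = - / 2 ^ k) by (unfold dv; field; lra). lra. }
    assert (U1 : x < P (m1 + 1) k) by (apply H_gt_P; auto; rewrite dv_add, dv_1; lra).
    assert (U2 : y < P (m2 + 1) k) by (apply H_gt_P; auto; rewrite dv_add, dv_1; lra).
    assert (Lo : P (m1 - 1 + (m2 - 1)) k <= U x y).
    { rewrite <- P_add. apply Umono; auto using IP. }
    assert (Hi : U x y < P (m1 + 1 + (m2 + 1)) k).
    { rewrite <- P_add. apply Rlt_le_trans with (U (P (m1 + 1) k) y).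
      - apply strict_M; auto using inM_P.
      - apply Umono_r; auto using IP. lra. }
    apply H_ge in Lo; auto. apply H_le in Hi; auto.
    replace (m1 - 1 + (m2 - 1))%Z with (m1 + m2 + -1 + -1)%Z in Lo by lia.
    replace (m1 + 1 + (m2 + 1))%Z with (m1 + m2 + 1 + 1)%Z in Hi by lia.
    rewrite !dv_add in Lo, Hi. rewrite !dv_1 in Hi.
    assert (dv (-1) k = - / 2 ^ k) by (unfold dv; field; pose proof (pow2_pos k); lra).
    rewrite H in Lo. apply Rabs_le. lra. }
  destruct (Req_dec (Hf (U x y) - (Hf x + Hf y)) 0) as [E|E]; [lra|].
  exfalso. assert (P0 : 0 < Rabs (Hf (U x y) - (Hf x + Hf y)) / 4).
  { apply Rdiv_lt_0_compat; [apply Rabs_pos_lt; auto|lra]. }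
  destruct (pow2_small _ P0) as [k Hk]. specialize (B k). lra.
Qed.

Lemma r_to_e eps : 0 < eps -> exists k, r k < e + eps.
Proof.
  intros Heps. destruct (Classical_Prop.classic (exists k, r k < e + eps)) as [H|H]; auto.
  exfalso.
  assert (H' : forall k, e + eps <= r k).
  { intros k. destruct (Rle_lt_dec (e + eps) (r k)); auto. exfalso; apply H; eauto. }
  assert (HG : exists l, is_glb (fun s => exists k, s = r k) l).
  { apply glb_exists.
    - exists u. exists O. auto.
    - exists e. intros s [k ->]. pose proof (r_range k). lra. }
  destruct HG as [l [Hl1 Hl2]].
  assert (le : e + eps <= l). { apply Hl2. intros s [k ->]. auto. }
  assert (lu : l <= u). { apply Hl1. exists O. auto. }
  pose proof u_lt_d. pose proof Iu as [_ Hu1].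
  assert (Il : I01 l) by (unfold I01; lra).
  apply (no_idem l); [lra|].
  apply Rle_antisym.
  - apply Hl2. intros s [k ->]. rewrite <- r_sq. apply Umono; auto using Ir;
    apply Hl1; exists (S k); auto.
  - apply Rle_trans with (U e l). rewrite Uneut_l; auto; lra. apply Umono_l; auto using Ie. lra.
Qed.

Lemma H_strict x y : inM x -> inM y -> x < y -> Hf x < Hf y.
Proof.
  intros Hx Hy Lt. assert (Ix := inM_I01 _ Hx).
  pose proof (CH x e) as C.
  destruct C with (eps := y - x) as [del [Hdel Hdel']].
  { destruct Hx. pose proof d_le_1. lra. }
  { unfold Icc; lra. }
  { lra. }
  destruct (r_to_e del Hdel) as [k Hk].
  pose proof (r_range k).
  assert (K : U x (r k) < y).
  { specialize (Hdel' x (r k) Ix). rewrite Uneut_r in Hdel'; auto.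
    assert (Rabs (U x (r k) - x) < y - x).
    { apply Hdel'. unfold Icc. pose proof (Ir k) as [_ ?]. lra.
      replace (x - x) with 0 by ring. rewrite Rabs_R0; auto.
      rewrite Rabs_right; lra. }
    apply Rabs_def2 in H0. lra. }
  apply Rlt_le_trans with (Hf (U x (r k))).
  - rewrite H_add; auto using inM_r. rewrite <- P_1, H_P, dv_1.
    assert (0 < / 2 ^ k) by (apply Rinv_0_lt_compat, pow2_pos). lra.
  - apply H_mono; auto using inM_U, inM_r. lra.
Qed.

Lemma r'_lt_e k : r' k < e.
Proof.
  destruct (r_unit k) as [_ [_ E]]. pose proof (r_range k).
  destruct (Rlt_le_dec (r' k) e) as [L|L]; auto.
  assert (U (r k) e <= U (r k) (r' k)) by (apply Umono_r; auto using Ir, Ie, inM_I01, inM_r').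
  rewrite Uneut_r in H0; auto using Ir. lra.
Qed.

Lemma H_cont x : inM x -> rc1 Hf inM x.
Proof.
  intros Hx eps Heps. destruct (pow2_small eps Heps) as [k Hk].
  assert (Ix := inM_I01 _ Hx).
  set (xp := U x (r k)). set (xm := U x (r' k)).
  assert (Hxp : x < xp).
  { unfold xp. rewrite <- (Uneut_r x) at 1; auto. rewrite !(Ucomm x); auto using Ie, Ir.
    apply strict_M; auto using inM_e, inM_r. apply r_range. }
  assert (Hxm : xm < x).
  { unfold xm. rewrite <- (Uneut_r x) at 2; auto. rewrite !(Ucomm x); auto using Ie, inM_I01, inM_r'.
    apply strict_M; auto using inM_e, inM_r'. apply r'_lt_e. }
  assert (Mp : inM xp) by (apply inM_U; auto using inM_r).
  assert (Mm : inM xm) by (apply inM_U; auto using inM_r').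
  assert (Ep : Hf xp = Hf x + / 2 ^ k).
  { unfold xp. rewrite H_add, <- P_1, H_P, dv_1; auto using inM_r. }
  assert (Em : Hf xm = Hf x - / 2 ^ k).
  { unfold xm. rewrite H_add, <- P_m1, H_P; auto using inM_r'.
    unfold dv. simpl. field. pose proof (pow2_pos k); lra. }
  exists (Rmin (xp - x) (x - xm)). split. { apply Rmin_pos; lra. }
  intros y Hy E.
  assert (E1 : Rabs (y - x) < xp - x) by (eapply Rlt_le_trans; [exact E|apply Rmin_l]).
  assert (E2 : Rabs (y - x) < x - xm) by (eapply Rlt_le_trans; [exact E|apply Rmin_r]).
  apply Rabs_def2 in E1. apply Rabs_def2 in E2.
  assert (A1 : Hf y <= Hf xp) by (apply H_mono; auto; lra).
  assert (A2 : Hf xm <= Hf y) by (apply H_mono; auto; lra).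
  apply Rabs_def1; lra.
Qed.

Lemma nat_above z : exists n : nat, z < INR n.
Proof.
  destruct (Rlt_le_dec z 0) as [L|L]; [exists O; simpl; lra|].
  destruct (archimed z) as [H1 _].
  assert (HN : (0 < up z)%Z) by (apply lt_IZR; lra).
  exists (Z.to_nat (up z)). rewrite INR_IZR_INZ, Z2Nat.id; [lra|lia].
Qed.

Lemma H_lim_lo M : exists del, 0 < del /\ forall x, a < x < a + del -> Hf x < M.
Proof.
  destruct (nat_above (- M)) as [n Hn].
  exists (pw v n - a).
  pose proof (pv_gt_a n). pose proof a_ge_0. split; [lra|].
  intros x Hx.
  assert (xM : inM x).
  { split; [lra|]. pose proof (inM_pv n) as [_ ?]. lra. }
  apply Rle_lt_trans with (dv (- Z.of_nat n) 0).
  - apply H_le; auto. rewrite P_negnat. lra.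
  - unfold dv. simpl. rewrite opp_IZR, <- INR_IZR_INZ. lra.
Qed.

Lemma H_lim_hi M : exists del, 0 < del /\ forall x, d - del < x < d -> M < Hf x.
Proof.
  destruct (nat_above M) as [n Hn].
  exists (d - pw u n). pose proof (pu_lt_d n). split; [lra|].
  intros x Hx.
  assert (xM : inM x).
  { split; [|lra]. pose proof (inM_pu n) as [? _]. lra. }
  apply Rlt_le_trans with (dv (Z.of_nat n) 0).
  - rewrite dv_nat. auto.
  - apply H_ge; auto. rewrite P_nat. lra.
Qed.

End Mid.
End Uni.

Section Repr.
Variables (W : R -> R -> R) (f a d : R) (G : R -> R).
Hypothesis Had : a < d.
Hypothesis Hf : a < f < d.
Hypothesis Wcl : forall x y, a < x < d -> a < y < d -> a < W x y < d.
Hypothesis Wcomm : forall x y, a < x < d -> a < y < d -> W x y = W y x.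
Hypothesis Wassoc : forall x y z, a < x < d -> a < y < d -> a < z < d -> W x (W y z) = W (W x y) z.
Hypothesis Wmono : forall x1 x2 y, a < x1 < d -> a < x2 < d -> a < y < d -> x1 <= x2 -> W x1 y <= W x2 y.
Hypothesis Wneut : forall x, a < x < d -> W f x = x.
Hypothesis Gstrict : forall x y, a < x < d -> a < y < d -> x < y -> G x < G y.
Hypothesis Gcont : forall x, a < x < d -> rc1 G (fun z => a < z < d) x.
Hypothesis Gf : G f = 0.
Hypothesis Glo : forall M, exists del, 0 < del /\ forall x, a < x < a + del -> G x < M.
Hypothesis Ghi : forall M, exists del, 0 < del /\ forall x, d - del < x < d -> M < G x.
Hypothesis Gadd : forall x y, a < x < d -> a < y < d -> G (W x y) = G x + G y.

Definition sc (z : R) := a + (d - a) * z.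
Definition usc (z : R) := (z - a) / (d - a).
Lemma sc_usc z : sc (usc z) = z. Proof. unfold sc, usc. field. lra. Qed.
Lemma usc_sc z : usc (sc z) = z. Proof. unfold sc, usc. field. lra. Qed.
Lemma sc_open z : 0 < z < 1 -> a < sc z < d.
Proof. intros. unfold sc. split; nra. Qed.
Lemma usc_open z : a < z < d -> 0 < usc z < 1.
Proof.
  intros. unfold usc. split.
  - apply Rdiv_lt_0_compat; lra.
  - apply (Rmult_lt_reg_r (d - a)); [lra|]. unfold Rdiv. rewrite Rmult_assoc, Rinv_l; lra.
Qed.
Lemma usc_le x y : x <= y -> usc x <= usc y.
Proof. intros. unfold usc. unfold Rdiv. apply Rmult_le_compat_r; [left; apply Rinv_0_lt_compat; lra|lra]. Qed.

Definition Wt (x y : R) := usc (W (sc x) (sc y)).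

Lemma Wt_open x y : 0 < x < 1 -> 0 < y < 1 -> 0 < Wt x y < 1.
Proof. intros. unfold Wt. apply usc_open, Wcl; apply sc_open; auto. Qed.

Definition V (x y : R) : R :=
  if Rle_dec 1 (Rmax x y) then 1 else if Rle_dec (Rmin x y) 0 then 0 else Wt x y.

Lemma V_1l y : y <= 1 -> V 1 y = 1.
Proof. intros. unfold V. destruct Rle_dec as [L|L]; auto. exfalso. apply L. apply Rmax_l. Qed.
Lemma V_1r y : y <= 1 -> V y 1 = 1.
Proof. intros. unfold V. destruct Rle_dec as [L|L]; auto. exfalso. apply L. apply Rmax_r. Qed.
Lemma V_0l y : 0 <= y < 1 -> V 0 y = 0.
Proof.
  intros. unfold V. destruct Rle_dec as [L|L].
  - exfalso. unfold Rmax in L. destruct Rle_dec in L; lra.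
  - destruct Rle_dec as [L2|L2]; auto. exfalso. apply L2. apply Rmin_l.
Qed.
Lemma V_0r y : 0 <= y < 1 -> V y 0 = 0.
Proof.
  intros. unfold V. destruct Rle_dec as [L|L].
  - exfalso. unfold Rmax in L. destruct Rle_dec in L; lra.
  - destruct Rle_dec as [L2|L2]; auto. exfalso. apply L2. apply Rmin_r.
Qed.
Lemma V_oo x y : 0 < x < 1 -> 0 < y < 1 -> V x y = Wt x y.
Proof.
  intros. unfold V. destruct Rle_dec as [L|L].
  - exfalso. unfold Rmax in L. destruct Rle_dec in L; lra.
  - destruct Rle_dec as [L2|L2]; auto. exfalso. unfold Rmin in L2. destruct Rle_dec in L2; lra.
Qed.

Lemma tri01 x : I01 x -> x = 0 \/ 0 < x < 1 \/ x = 1.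
Proof. unfold I01. intros. lra. Qed.

Ltac add_wt := repeat match goal with |- context [Wt ?p ?q] =>
  lazymatch goal with H : 0 < Wt p q < 1 |- _ => fail | _ =>
    assert (0 < Wt p q < 1) by (apply Wt_open; lra) end end.

Ltac vsimp := repeat (add_wt; first
  [ match goal with |- context [V 1 ?y] => rewrite (V_1l y) by lra end
  | match goal with |- context [V ?y 1] => rewrite (V_1r y) by lra end
  | match goal with |- context [V 0 ?y] => rewrite (V_0l y) by lra end
  | match goal with |- context [V ?y 0] => rewrite (V_0r y) by lra end
  | match goal with |- context [V ?x ?y] => rewrite (V_oo x y) by lra end ]); add_wt.

Ltac cls x := let H := fresh in
  match goal with Hx : I01 x |- _ => destruct (tri01 x Hx) as [H|[H|H]]; [subst x| |subst x] end.

Lemma Wt_comm x y : 0 < x < 1 -> 0 < y < 1 -> Wt x y = Wt y x.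
Proof. intros. unfold Wt. rewrite Wcomm; auto; apply sc_open; auto. Qed.
Lemma Wt_assoc x y z : 0 < x < 1 -> 0 < y < 1 -> 0 < z < 1 -> Wt x (Wt y z) = Wt (Wt x y) z.
Proof.
  intros. unfold Wt. rewrite !sc_usc. rewrite Wassoc; auto; apply sc_open; auto.
Qed.
Lemma Wt_mono x1 x2 y : 0 < x1 < 1 -> 0 < x2 < 1 -> 0 < y < 1 -> x1 <= x2 -> Wt x1 y <= Wt x2 y.
Proof.
  intros. unfold Wt. apply usc_le. apply Wmono; try apply sc_open; auto.
  unfold sc. nra.
Qed.
Definition f1 := usc f.
Lemma f1_open : 0 < f1 < 1. Proof. apply usc_open; auto. Qed.
Lemma Wt_neut x : 0 < x < 1 -> Wt f1 x = x.
Proof. intros. unfold Wt, f1. rewrite sc_usc, Wneut, usc_sc; auto. apply sc_open; auto. Qed.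

Lemma V_uninorm : uninorm V f1.
Proof.
  pose proof f1_open.
  split; [unfold I01; lra|]. split; [|split; [|split; [|split]]].
  - intros x y Hx Hy. cls x; cls y; vsimp; unfold I01; lra.
  - intros x y Hx Hy. cls x; cls y; vsimp; auto. apply Wt_comm; auto.
  - intros x y z Hx Hy Hz. cls x; cls y; cls z; vsimp; auto. apply Wt_assoc; auto.
  - intros x1 x2 y H1 H2 Hy Le. cls x1; cls x2; cls y; vsimp; try lra.
    apply Wt_mono; auto.
  - intros x Hx. cls x; vsimp; auto. apply Wt_neut; auto.
Qed.

Definition h (z : R) := G (sc z).

Lemma repr_V : representable V f1.
Proof.
  pose proof f1_open.
  split; [exact H|]. split; [exact V_uninorm|].
  exists h. split; [|split; [|split; [|split; [|split; [|split; [|split]]]]]].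
  - intros x y Hx Hy Lt. unfold h. apply Gstrict; try apply sc_open; auto.
    unfold sc. nra.
  - intros x Hx eps Heps.
    destruct (Gcont (sc x) (sc_open x Hx) eps Heps) as [del [Hdel Hdel']].
    exists (Rmin (del / (d - a)) (Rmin x (1 - x))). split.
    { apply Rmin_pos; [apply Rdiv_lt_0_compat; lra|]. destruct Hx. apply Rmin_pos; lra. }
    intros z [_ Hz]. simpl in Hz. unfold Rdist in *.
    assert (Z1 : Rabs (z - x) < del / (d - a)) by (eapply Rlt_le_trans; [exact Hz|apply Rmin_l]).
    assert (Z2 : Rabs (z - x) < Rmin x (1 - x)) by (eapply Rlt_le_trans; [exact Hz|apply Rmin_r]).
    assert (Z3 : Rabs (z - x) < x) by (eapply Rlt_le_trans; [exact Z2|apply Rmin_l]).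
    assert (Z4 : Rabs (z - x) < 1 - x) by (eapply Rlt_le_trans; [exact Z2|apply Rmin_r]).
    apply Rabs_def2 in Z3. apply Rabs_def2 in Z4.
    unfold h. apply Hdel'. apply sc_open; lra.
    unfold sc. replace (a + (d - a) * z - (a + (d - a) * x)) with ((d - a) * (z - x)) by ring.
    rewrite Rabs_mult, Rabs_right by lra.
    apply (Rmult_lt_reg_r (/ (d - a))). apply Rinv_0_lt_compat; lra.
    replace ((d - a) * Rabs (z - x) * / (d - a)) with (Rabs (z - x)) by (field; lra). exact Z1.
  - unfold h, f1. rewrite sc_usc. auto.
  - intros M. destruct (Glo M) as [del [Hdel Hdel']].
    exists (del / (d - a)). split; [apply Rdiv_lt_0_compat; lra|].
    intros x Hx. unfold h. apply Hdel'. unfold sc. split; [nra|].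
    assert ((d - a) * x < (d - a) * (del / (d - a))) by (apply Rmult_lt_compat_l; lra).
    replace ((d - a) * (del / (d - a))) with del in H0 by (field; lra). lra.
  - intros M. destruct (Ghi M) as [del [Hdel Hdel']].
    exists (del / (d - a)). split; [apply Rdiv_lt_0_compat; lra|].
    intros x Hx. unfold h. apply Hdel'. unfold sc. split; [|nra].
    assert ((d - a) * (1 - del / (d - a)) < (d - a) * x) by (apply Rmult_lt_compat_l; lra).
    replace ((d - a) * (1 - del / (d - a))) with (d - a - del) in H0 by (field; lra). lra.
  - intros x y Hx Hy. rewrite V_oo; auto. split; [apply Wt_open; auto|].
    unfold h, Wt. rewrite sc_usc. apply Gadd; apply sc_open; auto.
  - intros y Hy. split; [apply V_0l | apply V_0r]; lra.
  - intros y Hy. split; [apply V_1l | apply V_1r]; lra.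
Qed.

Lemma lin_V : linear_transform_on W V a d.
Proof.
  intros x y Hx Hy. rewrite V_oo; try apply usc_open; auto.
  fold (usc x) (usc y). unfold Wt. rewrite !sc_usc. unfold usc. field. lra.
Qed.

End Repr.

Lemma make_repr (W : R -> R -> R) (f a d : R) (G : R -> R) :
  a < d -> a < f < d ->
  (forall x y, a < x < d -> a < y < d -> a < W x y < d) ->
  (forall x y, a < x < d -> a < y < d -> W x y = W y x) ->
  (forall x y z, a < x < d -> a < y < d -> a < z < d -> W x (W y z) = W (W x y) z) ->
  (forall x1 x2 y, a < x1 < d -> a < x2 < d -> a < y < d -> x1 <= x2 -> W x1 y <= W x2 y) ->
  (forall x, a < x < d -> W f x = x) ->
  (forall x y, a < x < d -> a < y < d -> x < y -> G x < G y) ->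
  (forall x, a < x < d -> rc1 G (fun z => a < z < d) x) ->
  G f = 0 ->
  (forall M, exists del, 0 < del /\ forall x, a < x < a + del -> G x < M) ->
  (forall M, exists del, 0 < del /\ forall x, d - del < x < d -> M < G x) ->
  (forall x y, a < x < d -> a < y < d -> G (W x y) = G x + G y) ->
  exists V f1, representable V f1 /\ linear_transform_on W V a d.
Proof.
  intros. exists (V W a d), (f1 f a d). split.
  - apply repr_V with (G := G); auto.
  - apply lin_V; auto.
Qed.

Lemma rc1_addc G A x k : rc1 G A x -> rc1 (fun z => G z + k) A x.
Proof.
  intros H eps Heps. destruct (H eps Heps) as [del [Hd Hd']]. exists del. split; auto.
  intros y Hy E. replace (G y + k - (G x + k)) with (G y - G x) by ring. auto.
Qed.

Section Core.
Variables (U : R -> R -> R) (e : R).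
Hypothesis HU : uninorm U e.
Hypothesis He : 0 < e < 1.
Hypothesis Hc : continuous_underlying U e.
Variables u v : R.
Hypothesis Huv : uunit U e u v.
Hypothesis Heu : e < u.
Variables a d : R.
Hypothesis Hd : is_lub (fun s => exists n, s = pw U e u n) d.
Hypothesis Ha : is_glb (fun s => exists n, s = pw U e v n) a.
Variables (U2 : R -> R -> R) (g c : R).
Hypothesis HU2 : uninorm U2 g.
Hypothesis Hg : 0 < g < 1.
Hypothesis Hgc : uunit U e g c.
Hypothesis Hguv : (g = u /\ c = v) \/ (g = v /\ c = u).
Hypothesis HU2eq : forall s t, I01 s -> I01 t -> U2 s t = U (U s c) t.

Lemma adfacts : a < e /\ e < d /\ 0 <= a /\ d <= 1 /\ u < d /\ a < v /\ v < e.
Proof.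
  split; [exact (a_lt_e U e HU He u v Huv Heu a Ha)|].
  split; [exact (e_lt_d U e HU He u v Huv Heu d Hd)|].
  split; [exact (a_ge_0 U e HU He u v Huv a Ha)|].
  split; [exact (d_le_1 U e HU He u v Huv d Hd)|].
  split; [exact (u_lt_d U e HU He u v Huv Heu d Hd)|].
  split; [exact (a_lt_v U e HU He u v Huv Heu a Ha)|].
  exact (Hve U e HU He u v Huv Heu).
Qed.

Lemma gM : a < g < d.
Proof. destruct adfacts as [? [? [? [? [? [? ?]]]]]]. destruct Hguv as [[-> ->]|[-> ->]]; lra. Qed.
Lemma cM : a < c < d.
Proof. destruct adfacts as [? [? [? [? [? [? ?]]]]]]. destruct Hguv as [[-> ->]|[-> ->]]; lra. Qed.
Lemma Ic : I01 c. Proof. destruct Hgc as [_ [H _]]. auto. Qed.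
Lemma Ig : I01 g. Proof. destruct Hgc as [H _]. auto. Qed.
Local Hint Resolve Ic Ig : core.

Lemma U2_alt s t : I01 s -> I01 t -> U2 s t = U s (U t c).
Proof.
  intros Hs Ht. rewrite (Ucomm U2 g HU2); auto. rewrite HU2eq; auto.
  rewrite (Ucomm U e HU (U t c)); auto; apply (Urange U e HU); auto.
Qed.

Lemma cont_U2 : continuous_underlying U2 g.
Proof.
  destruct adfacts as [H1 [H2 [H3 [H4 [H5 [H6 H7]]]]]].
  split.
  - intros x y Hx Hy.
    set (F := fun p q => 0 + / g * U (0 + g * p) (U (0 + g * q) c)).
    assert (HF : rc2 F I01 I01 x y).
    { unfold F. apply (rc1_post2 (fun z => 0 + / g * z) (fun _ => True)
                         (fun p q => U (0 + g * p) (U (0 + g * q) c))); [apply rc1_lin| |auto].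
      apply (rc2_comp U I01 (Icc 0 e) I01 I01 (fun p => 0 + g * p) (fun q => U (0 + g * q) c)).
      - apply (CL U e HU He Hc u v Huv d Hd).
        + unfold I01 in Hx. split; [nra|]. apply Rle_lt_trans with g; [nra|lra].
        + unfold Icc. assert (Iq : I01 (0 + g * y)) by (unfold I01 in *; split; nra).
          split.
          * destruct (Urange U e HU (0 + g * y) c); auto.
          * destruct Hgc as [_ [_ E]]. rewrite <- E. apply Umono_l with (U := U) (e := e); auto.
            unfold I01 in *; nra.
      - apply rc1_lin.
      - apply (rc1_comp (fun z => U z c) (fun p => 0 + g * p) I01 I01).
        + apply (T_cont U e HU He c g); [apply (unit_sym U e HU); exact Hgc|]. unfold I01 in *; split; nra.
        + apply rc1_lin.
        + intros z Hz; unfold I01 in *; split; nra.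
      - intros z Hz; unfold I01 in *; split; nra.
      - intros z Hz. assert (Iq : I01 (0 + g * z)) by (unfold I01 in *; split; nra).
        unfold Icc. split.
        * destruct (Urange U e HU (0 + g * z) c); auto.
        * destruct Hgc as [_ [_ E]]. rewrite <- E. apply Umono_l with (U := U) (e := e); auto.
          unfold I01 in *; nra. }
    unfold rc2 in HF. intros eps Heps. destruct (HF eps Heps) as [del [Hdel Hdel']].
    exists del. split; auto. intros x' y' Hx' Hy' E1 E2.
    specialize (Hdel' x' y' Hx' Hy' E1 E2). unfold F in Hdel'.
    unfold underlying_tnorm. rewrite !U2_alt; try (unfold I01 in *; split; nra).
    replace (g * x') with (0 + g * x') by ring. replace (g * x) with (0 + g * x) by ring.
    replace (g * y') with (0 + g * y') by ring. replace (g * y) with (0 + g * y) by ring.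
    replace (U (0 + g * x') (U (0 + g * y') c) / g - U (0 + g * x) (U (0 + g * y) c) / g)
      with (0 + / g * U (0 + g * x') (U (0 + g * y') c) - (0 + / g * U (0 + g * x) (U (0 + g * y) c)))
      by (field; lra). auto.
  - intros x y Hx Hy.
    set (F := fun p q => (- g / (1 - g)) + / (1 - g) * U (g + (1 - g) * p) (U (g + (1 - g) * q) c)).
    assert (Hs : forall p, I01 p -> I01 (g + (1 - g) * p)).
    { intros p Hp. unfold I01 in *. split; nra. }
    assert (Ht : forall p, I01 p -> Icc e 1 (U (g + (1 - g) * p) c)).
    { intros p Hp. specialize (Hs p Hp). unfold Icc. split.
      - destruct Hgc as [_ [_ E]]. rewrite <- E. apply Umono_l with (U := U) (e := e); auto.
        unfold I01 in *; nra.
      - destruct (Urange U e HU (g + (1 - g) * p) c); auto. }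
    assert (HF : rc2 F I01 I01 x y).
    { unfold F. apply (rc1_post2 (fun z => (- g / (1 - g)) + / (1 - g) * z) (fun _ => True)
                         (fun p q => U (g + (1 - g) * p) (U (g + (1 - g) * q) c))); [apply rc1_lin| |auto].
      apply (rc2_comp U I01 (Icc e 1) I01 I01 (fun p => g + (1 - g) * p) (fun q => U (g + (1 - g) * q) c)).
      - apply (CH U e HU He Hc u v Huv a Ha).
        + unfold I01 in Hx. pose proof gM. split; nra.
        + apply Ht; auto.
      - apply rc1_lin.
      - apply (rc1_comp (fun z => U z c) (fun p => g + (1 - g) * p) I01 I01).
        + apply (T_cont U e HU He c g); [apply (unit_sym U e HU); exact Hgc|]. apply Hs; auto.
        + apply rc1_lin.
        + auto.
      - auto.
      - auto. }
    unfold rc2 in HF. intros eps Heps. destruct (HF eps Heps) as [del [Hdel Hdel']].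
    exists del. split; auto. intros x' y' Hx' Hy' E1 E2.
    specialize (Hdel' x' y' Hx' Hy' E1 E2). unfold F in Hdel'.
    unfold underlying_tconorm. rewrite !U2_alt; auto.
    replace ((U (g + (1 - g) * x') (U (g + (1 - g) * y') c) - g) / (1 - g) -
             (U (g + (1 - g) * x) (U (g + (1 - g) * y) c) - g) / (1 - g))
      with (- g / (1 - g) + / (1 - g) * U (g + (1 - g) * x') (U (g + (1 - g) * y') c) -
            (- g / (1 - g) + / (1 - g) * U (g + (1 - g) * x) (U (g + (1 - g) * y) c)))
      by (field; lra). auto.
Qed.


Lemma M_I01 x : a < x < d -> I01 x.
Proof. destruct adfacts as [? [? [? [? _]]]]. unfold I01; lra. Qed.
Local Hint Resolve M_I01 : core.

Lemma core_rest : exists a0 d0 : R,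
      I01 a0 /\ I01 d0 /\ idempotent U a0 /\ idempotent U d0 /\ a0 < d0 /\
      (exists (V1 : R -> R -> R) (f1 : R), representable V1 f1 /\ linear_transform_on U V1 a0 d0) /\
      (exists (V2 : R -> R -> R) (f2 : R), representable V2 f2 /\ linear_transform_on U2 V2 a0 d0) /\
      (forall x y, in_outer a0 d0 x -> in_outer a0 d0 y -> U x y = U2 x y).
Proof.
  destruct adfacts as [H1 [H2 [H3 [H4 [H5 [H6 H7]]]]]].
  set (G := Hf U e HU He Hc u v).
  assert (Ucl : forall x y, a < x < d -> a < y < d -> a < U x y < d).
  { intros. apply (inM_U U e HU He u v Huv Heu a d Hd Ha); auto. }
  exists a, d. split; [unfold I01; lra|]. split; [unfold I01; lra|].
  split; [exact (a_idem U e HU He Hc u v Huv Heu a Ha)|].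
  split; [exact (d_idem U e HU He Hc u v Huv Heu d Hd)|].
  split; [lra|]. split; [|split].
  - apply (make_repr U e a d G); auto.
    + lra.
    + intros. apply (Ucomm U e HU); auto.
    + intros. apply (Uassoc U e HU); auto.
    + intros. apply (Umono_l U e HU); auto.
    + intros. apply (Uneut_l U e HU); auto.
    + intros. apply (H_strict U e HU He Hc u v Huv Heu a d Hd Ha); auto.
    + intros. apply (H_cont U e HU He Hc u v Huv Heu a d Hd Ha); auto.
    + exact (H_e U e HU He Hc u v Huv Heu a d Hd Ha).
    + exact (H_lim_lo U e HU He Hc u v Huv Heu a d Hd Ha).
    + exact (H_lim_hi U e HU He Hc u v Huv Heu a d Hd Ha).
    + intros. apply (H_add U e HU He Hc u v Huv Heu a d Hd Ha); auto.
  - assert (U2cl : forall x y, a < x < d -> a < y < d -> a < U2 x y < d).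
    { intros x y Hx Hy. rewrite HU2eq; auto. apply Ucl; auto. apply Ucl; auto. apply cM. }
    apply (make_repr U2 g a d (fun z => G z + G c)); auto.
    + lra.
    + apply gM.
    + intros. apply (Ucomm U2 g HU2); auto.
    + intros. apply (Uassoc U2 g HU2); auto.
    + intros. apply (Umono_l U2 g HU2); auto.
    + intros. apply (Uneut_l U2 g HU2); auto.
    + intros. apply Rplus_lt_compat_r. apply (H_strict U e HU He Hc u v Huv Heu a d Hd Ha); auto.
    + intros. apply rc1_addc. apply (H_cont U e HU He Hc u v Huv Heu a d Hd Ha); auto.
    + unfold G. rewrite <- (H_add U e HU He Hc u v Huv Heu a d Hd Ha); [|apply gM|apply cM].
      destruct Hgc as [_ [_ E]]. rewrite E. exact (H_e U e HU He Hc u v Huv Heu a d Hd Ha).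
    + intros M. destruct (H_lim_lo U e HU He Hc u v Huv Heu a d Hd Ha (M - G c)) as [del [Hdel Hdel']].
      exists del. split; auto. intros x Hx. specialize (Hdel' x Hx). fold G in Hdel'. lra.
    + intros M. destruct (H_lim_hi U e HU He Hc u v Huv Heu a d Hd Ha (M - G c)) as [del [Hdel Hdel']].
      exists del. split; auto. intros x Hx. specialize (Hdel' x Hx). fold G in Hdel'. lra.
    + intros x y Hx Hy. rewrite HU2eq; auto. unfold G.
      rewrite !(H_add U e HU He Hc u v Huv Heu a d Hd Ha); auto; try apply cM.
      * lra.
      * apply Ucl; auto. apply cM.
  - intros x y Hx Hy. assert (Ix : I01 x) by (unfold in_outer, I01 in *; lra).
    assert (Iy : I01 y) by (unfold in_outer, I01 in *; lra).
    rewrite HU2eq; auto. f_equal.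
    destruct (outer_fix U e HU He Hc u v Huv Heu a d Hd Ha x Hx) as [F1 F2].
    destruct Hguv as [[-> ->]|[-> ->]]; auto.
Qed.

End Core.

Lemma neg_surj N : fuzzy_negation N -> continuous_on01 N -> forall p, I01 p -> exists x, I01 x /\ N x = p.
Proof.
  intros [HN1 [HN2 [HN3 HN4]]] HcN p Hp.
  destruct (IVT_on (fun z => N (1 + -1 * z)) 0 1 p) as [z [Hz E]]; [lra| | |].
  - intros z Hz. apply (rc1_comp N (fun z => 1 + -1 * z) I01 (Icc 0 1)).
    + unfold rc1. apply HcN. unfold Icc, I01 in *. lra.
    + apply rc1_lin.
    + intros w Hw. unfold Icc, I01 in *. lra.
  - replace (1 + -1 * 0) with 1 by ring. replace (1 + -1 * 1) with 0 by ring.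
    rewrite HN3, HN4. unfold I01 in Hp. lra.
  - exists (1 + -1 * z). split; auto. unfold Icc, I01 in *. lra.
Qed.

Theorem mainTheorem7 :
  forall (N1 N2 : R -> R) (U1 U2 : R -> R -> R) (e1 e2 : R),
    fuzzy_negation N1 -> continuous_on01 N1 ->
    fuzzy_negation N2 -> continuous_on01 N2 ->
    0 < e1 < 1 -> uninorm U1 e1 -> disjunctive U1 ->
    0 < e2 < 1 -> uninorm U2 e2 -> disjunctive U2 ->
    (forall x y, I01 x -> I01 y -> U1 (N1 x) y = U2 (N2 x) y) ->
    continuous_underlying U1 e1 ->
    (exists x, I01 x /\ N1 x <> N2 x) ->
    continuous_underlying U2 e2 /\
    exists a d : R,
      I01 a /\ I01 d /\ idempotent U1 a /\ idempotent U1 d /\ a < d /\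
      (exists (V1 : R -> R -> R) (f1 : R), representable V1 f1 /\ linear_transform_on U1 V1 a d) /\
      (exists (V2 : R -> R -> R) (f2 : R), representable V2 f2 /\ linear_transform_on U2 V2 a d) /\
      (forall x y, in_outer a d x -> in_outer a d y -> U1 x y = U2 x y).
Proof.
  intros N1 N2 U1 U2 e1 e2 HN1 HcN1 HN2 HcN2 He1 HU1 _ He2 HU2 _ Heq Hc1 [x0 [Hx0 Hne]].
  assert (Ie1 : I01 e1) by (unfold I01; lra).
  assert (Ie2 : I01 e2) by (unfold I01; lra).
  assert (RN1 : forall x, I01 x -> I01 (N1 x)) by (apply HN1).
  assert (RN2 : forall x, I01 x -> I01 (N2 x)) by (apply HN2).
  assert (F1 : forall x, I01 x -> U1 (N1 x) e2 = N2 x).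
  { intros x Hx. rewrite Heq; auto. apply (Uneut_r U2 e2 HU2 He2); auto. }
  assert (F2 : forall x, I01 x -> U2 (N2 x) e1 = N1 x).
  { intros x Hx. rewrite <- Heq; auto. apply (Uneut_r U1 e1 HU1 He1); auto. }
  assert (F3 : forall p, I01 p -> U2 (U1 p e2) e1 = p).
  { intros p Hp. destruct (neg_surj N1 HN1 HcN1 p Hp) as [x [Hx <-]]. rewrite F1; auto. }
  assert (F4 : forall q, I01 q -> U1 (U2 q e1) e2 = q).
  { intros q Hq. destruct (neg_surj N2 HN2 HcN2 q Hq) as [x [Hx <-]]. rewrite F2; auto. }
  assert (F5 : forall p y, I01 p -> I01 y -> U1 p y = U2 (U1 p e2) y).
  { intros p y Hp Hy. destruct (neg_surj N1 HN1 HcN1 p Hp) as [x [Hx <-]]. rewrite F1; auto. }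
  set (c := U2 e1 e1).
  assert (Ic : I01 c) by (apply (Urange U2 e2 HU2); auto).
  assert (F6 : U1 c e2 = e1) by (apply F4; auto).
  assert (F7 : forall q, I01 q -> U1 (U1 q c) e2 = q).
  { intros q Hq. rewrite <- (Uassoc U1 e1 HU1); auto. rewrite F6. apply (Uneut_r U1 e1 HU1 He1); auto. }
  assert (F8 : forall s t, I01 s -> I01 t -> U2 s t = U1 (U1 s c) t).
  { intros s t Hs Ht. rewrite (F5 (U1 s c) t); auto. rewrite F7; auto. apply (Urange U1 e1 HU1); auto. }
  assert (Hunit : uunit U1 e1 e2 c).
  { split; [auto|split; [auto|]]. rewrite (Ucomm U1 e1 HU1); auto. }
  assert (Hne12 : e2 <> e1).
  { intros E. apply Hne. rewrite <- F1; auto. rewrite E. symmetry. apply (Uneut_r U1 e1 HU1 He1); auto. }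
  assert (Main : forall u v, uunit U1 e1 u v -> e1 < u -> ((e2 = u /\ c = v) \/ (e2 = v /\ c = u)) ->
    continuous_underlying U2 e2 /\
    exists a d : R,
      I01 a /\ I01 d /\ idempotent U1 a /\ idempotent U1 d /\ a < d /\
      (exists (V1 : R -> R -> R) (f1 : R), representable V1 f1 /\ linear_transform_on U1 V1 a d) /\
      (exists (V2 : R -> R -> R) (f2 : R), representable V2 f2 /\ linear_transform_on U2 V2 a d) /\
      (forall x y, in_outer a d x -> in_outer a d y -> U1 x y = U2 x y)).
  { intros u v Huv Heu Hguv.
    destruct (completeness (fun s => exists n, s = pw U1 e1 u n)) as [d Hd].
    { exists 1. intros s [n ->]. destruct (pw_range U1 e1 HU1 He1 u n); auto. destruct Huv; auto. }
    { exists e1. exists O. auto. }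
    assert (HA : exists a, is_glb (fun s => exists n, s = pw U1 e1 v n) a).
    { apply glb_exists. exists e1. exists O. auto.
      exists 0. intros s [n ->]. destruct (pw_range U1 e1 HU1 He1 v n); auto. destruct Huv as [_ [? _]]; auto. }
    destruct HA as [a Ha].
    split.
    - exact (cont_U2 U1 e1 HU1 He1 Hc1 u v Huv Heu a d Hd Ha U2 e2 c HU2 He2 Hunit Hguv F8).
    - exact (core_rest U1 e1 HU1 He1 Hc1 u v Huv Heu a d Hd Ha U2 e2 c HU2 He2 Hunit Hguv F8). }
  destruct (Rlt_le_dec e1 e2) as [L|L].
  - apply (Main e2 c); auto.
  - assert (L2 : e2 < e1) by lra.
    apply (Main c e2); auto.
    + apply (unit_sym U1 e1 HU1); auto.
    + destruct (Rlt_le_dec e1 c) as [L3|L3]; auto. exfalso.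
      assert (U1 e2 c <= U1 e2 e1) by (apply (Umono_r U1 e1 HU1); auto).
      destruct Hunit as [_ [_ E]]. rewrite E, (Uneut_r U1 e1 HU1 He1) in H; auto. lra.
Qed.
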